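(* Use the convention that the flow of a Hamiltonian $H$ is $\dot F=\{H,F\}$. (i) On $\mathcal C^\times_{n,d,q}$, for $k\ge1$, the flow of $H=\frac1k\operatorname{tr}Z^k$ starting at $(X,Z,V_\alpha,W_\alpha)$ is $X(t)=Xe^{-tZ^k}$, $Z(t)=Z$, $V_\alpha(t)=V_\alpha$, $W_\alpha(t)=W_\alpha$. (ii) On $\mathcal C_{n,d,q}$, for $k\geq1$, the flow of $H=\frac1k\operatorname{tr}Y^k$ starting at $(X,Y,V_\alpha,W_\alpha)$ is $X(\tau)=Xe^{-\tau Y^k}+Y^{-1}(e^{-\tau Y^k}-\mathrm{Id}_n)$, $Y(\tau)=Y$, $V_\alpha(\tau)=V_\alpha$, $W_\alpha(\tau)=W_\alpha$, where $Y^{-1}(e^{-\tau Y^k}-\mathrm{Id}_n)$ denotes the entire power series in $Y$ (defined also for singular $Y$). These flows are complete on the respective Calogero–Moser spaces.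
   Context: Fix $n,d\ge1$, $q\in\mathbb C^\times$ not a root of unity; $o(\alpha,\beta)=0,1,-1$ according as $\alpha=\beta,\alpha<\beta,\alpha>\beta$. $\mathcal M^\times_{n,d,q}$: tuples $(X,Z,V_\alpha,W_\alpha)_{\alpha=1}^d$, $X,Z\in\mathrm{GL}_n$, $V_\alpha\in\mathrm{Mat}_{1\times n}$, $W_\alpha\in\mathrm{Mat}_{n\times1}$, $\mathrm{Id}_n+W_\alpha V_\alpha$ invertible, $XZX^{-1}Z^{-1}(\mathrm{Id}_n+W_1V_1)^{-1}\cdots(\mathrm{Id}_n+W_dV_d)^{-1}=q\mathrm{Id}_n$. $\mathcal M_{n,d,q}$: tuples $(X,Y,V_\alpha,W_\alpha)$ with $X,Y\in\mathrm{Mat}_{n\times n}$, $\mathrm{Id}_n+XY$, $\mathrm{Id}_n+YX$, $\mathrm{Id}_n+W_\alpha V_\alpha$ invertible and $(\mathrm{Id}_n+XY)(\mathrm{Id}_n+YX)^{-1}(\mathrm{Id}_n+W_1V_1)^{-1}\cdots(\mathrm{Id}_n+W_dV_d)^{-1}=q\mathrm{Id}_n$. $\mathrm{GL}_n$ acts on both by conjugating $X,Y,Z$, $V\mapsto Vg^{-1}$, $W\mapsto gW$; the quotients $\mathcal C^\times_{n,d,q}=\mathcal M^\times_{n,d,q}/\!/\mathrm{GL}_n$, $\mathcal C_{n,d,q}=\mathcal M_{n,d,q}/\!/\mathrm{GL}_n$ are smooth of dimension $2nd$ and carry the Poisson brackets induced on invariant functions by the quasi-Poisson biderivations given by $\{X_{ij},X_{kl}\}=\tfrac12(\delta_{il}(X^2)_{kj}-\delta_{kj}(X^2)_{il})$;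 for $U\in\{Y,Z\}$: $\{U_{ij},U_{kl}\}=\tfrac12(\delta_{kj}(U^2)_{il}-\delta_{il}(U^2)_{kj})$; $\{X_{ij},Z_{kl}\}=\tfrac12((ZX)_{kj}\delta_{il}+\delta_{kj}(XZ)_{il}+Z_{kj}X_{il}-X_{kj}Z_{il})$; $\{X_{ij},Y_{kl}\}=\delta_{kj}\delta_{il}+\tfrac12((YX)_{kj}\delta_{il}+\delta_{kj}(XY)_{il}+Y_{kj}X_{il}-X_{kj}Y_{il})$; for $U\in\{X,Y,Z\}$: $\{U_{ij},W_{\alpha,k}\}=\tfrac12(\delta_{kj}(UW_\alpha)_i-U_{kj}W_{\alpha,i})$, $\{U_{ij},V_{\alpha,l}\}=\tfrac12((V_\alpha U)_j\delta_{il}-V_{\alpha,j}U_{il})$; $\{V_{\alpha,j},V_{\beta,l}\}=\tfrac12o(\beta,\alpha)(V_{\beta,j}V_{\alpha,l}+V_{\alpha,j}V_{\beta,l})$; $\{W_{\alpha,i},W_{\beta,k}\}=\tfrac12o(\beta,\alpha)(W_{\beta,k}W_{\alpha,i}+W_{\alpha,k}W_{\beta,i})$; $\{V_{\alpha,j},W_{\beta,k}\}=\delta_{\alpha\beta}(\delta_{kj}+\tfrac12W_{\alpha,k}V_{\alpha,j}+\tfrac12\delta_{kj}V_\alpha W_\alpha)+\tfrac12o(\alpha,\beta)(\delta_{kj}V_\alpha W_\beta+W_{\beta,k}V_{\alpha,j})$. The flow of a $\mathrm{GL}_n$-invariant $H$ is described on representatives $(X,Z,V,W)$ (resp. $(X,Y,V,W)$)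 by $\dot M_{ij}=\{H,M_{ij}\}$ for each matrix entry. *)

(* Defs.v *)
From Stdlib Require Import Reals ClassicalEpsilon Factorial.
From Stdlib Require Import Arith.
Open Scope R_scope.

Record C := mkC { Re : R; Im : R }.
Definition C0 : C := mkC 0 0.
Definition C1 : C := mkC 1 0.
Definition RC (r : R) : C := mkC r 0.
Definition Cadd (z w : C) : C := mkC (Re z + Re w) (Im z + Im w).
Definition Copp (z : C) : C := mkC (- Re z) (- Im z).
Definition Csub (z w : C) : C := Cadd z (Copp w).
Definition Cmul (z w : C) : C :=
  mkC (Re z * Re w - Im z * Im w) (Re z * Im w + Im z * Re w).
Definition Cnorm (z : C) : R := sqrt (Re z ^ 2 + Im z ^ 2).
Definition Cinv (z : C) : C :=
  mkC (Re z / (Re z ^ 2 + Im z ^ 2)) (- Im z / (Re z ^ 2 + Im z ^ 2)).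
Definition Cdiv (z w : C) : C := Cmul z (Cinv w).
Fixpoint Cpow (z : C) (m : nat) : C :=
  match m with O => C1 | S m' => Cmul z (Cpow z m') end.
Definition INC (m : nat) : C := RC (INR m).
Definition Chalf : C := RC (/ 2).

Fixpoint Csum (m : nat) (f : nat -> C) : C :=
  match m with O => C0 | S m' => Cadd (Csum m' f) (f m') end.

Definition Ccv (u : nat -> C) (l : C) : Prop :=
  forall eps, eps > 0 -> exists N, forall m, (m >= N)%nat -> Cnorm (Csub (u m) l) < eps.

Definition Cderiv (f : C -> C) (t L : C) : Prop :=
  forall eps, eps > 0 -> exists delta, delta > 0 /\
    forall h, h <> C0 -> Cnorm h < delta ->
      Cnorm (Csub (Cdiv (Csub (f (Cadd t h)) (f t)) h) L) < eps.

(* ---------- n x n matrices (entries with indices < n are meaningful) ---------- *)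
Definition Mat := nat -> nat -> C.
Definition M0 : Mat := fun _ _ => C0.
Definition Mid : Mat := fun i j => if Nat.eqb i j then C1 else C0.
Definition Madd (A B : Mat) : Mat := fun i j => Cadd (A i j) (B i j).
Definition Msub (A B : Mat) : Mat := fun i j => Csub (A i j) (B i j).
Definition Mscal (c : C) (A : Mat) : Mat := fun i j => Cmul c (A i j).
Definition Mmul (n : nat) (A B : Mat) : Mat :=
  fun i j => Csum n (fun l => Cmul (A i l) (B l j)).
Fixpoint Mpow (n : nat) (A : Mat) (m : nat) : Mat :=
  match m with O => Mid | S m' => Mmul n A (Mpow n A m') end.
Definition Mtr (n : nat) (A : Mat) : C := Csum n (fun i => A i i).
Definition Meq (n : nat) (A B : Mat) : Prop :=
  forall i j, (i < n)%nat -> (j < n)%nat -> A i j = B i j.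
Definition Minvertible (n : nat) (A : Mat) : Prop :=
  exists B, Meq n (Mmul n A B) Mid /\ Meq n (Mmul n B A) Mid.
(* the inverse (meaningful when A is invertible) *)
Definition Minv (n : nat) (A : Mat) : Mat :=
  epsilon (inhabits M0)
    (fun B => Meq n (Mmul n A B) Mid /\ Meq n (Mmul n B A) Mid).
Definition Mouter (w v : nat -> C) : Mat := fun i j => Cmul (w i) (v j).

Definition mseries (n : nat) (a : nat -> Mat) : Mat :=
  epsilon (inhabits M0)
    (fun E => forall i j, (i < n)%nat -> (j < n)%nat ->
       Ccv (fun m => Csum m (fun p => a p i j)) (E i j)).
Definition mexp (n : nat) (A : Mat) : Mat :=
  mseries n (fun p => Mscal (RC (/ INR (fact p))) (Mpow n A p)).
(* Y^{-1}(e^{-tau Y^k} - Id) as the entire series sum_{p>=1} (-tau)^p/p! Y^{kp-1} *)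
Definition Yinv_expm1 (n : nat) (Y : Mat) (k : nat) (tau : C) : Mat :=
  mseries n (fun p => match p with
                      | O => M0
                      | S _ => Mscal (Cmul (Cpow (Copp tau) p) (RC (/ INR (fact p))))
                                     (Mpow n Y (k * p - 1))
                      end).

(* ---------- points (X, U, V_alpha, W_alpha) ; U = Z (case i) or Y (case ii) ----
   alpha ranges over 0..d-1 (the paper's 1..d, order preserved);
   sV s alpha j = V_{alpha,j},  sW s alpha i = W_{alpha,i}. *)
Record St := mkSt { sX : Mat; sU : Mat; sV : nat -> nat -> C; sW : nat -> nat -> C }.

Definition IdWV (s : St) (a : nat) : Mat := Madd Mid (Mouter (sW s a) (sV s a)).

Fixpoint prodInv (n : nat) (s : St) (m : nat) : Mat :=
  match m with
  | O => Mid
  | S m' => Mmul n (prodInv n s m') (Minv n (IdWV s m'))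
  end.

Definition inMtimes (n d : nat) (q : C) (s : St) : Prop :=
  Minvertible n (sX s) /\ Minvertible n (sU s) /\
  (forall a, (a < d)%nat -> Minvertible n (IdWV s a)) /\
  Meq n (Mmul n (Mmul n (Mmul n (Mmul n (sX s) (sU s)) (Minv n (sX s)))
                        (Minv n (sU s)))
                (prodInv n s d))
        (Mscal q Mid).

Definition inM (n d : nat) (q : C) (s : St) : Prop :=
  let IXY := Madd Mid (Mmul n (sX s) (sU s)) in
  let IYX := Madd Mid (Mmul n (sU s) (sX s)) in
  Minvertible n IXY /\ Minvertible n IYX /\
  (forall a, (a < d)%nat -> Minvertible n (IdWV s a)) /\
  Meq n (Mmul n (Mmul n IXY (Minv n IYX)) (prodInv n s d)) (Mscal q Mid).

Inductive coord :=
| cX (i j : nat) | cU (i j : nat) | cV (a j : nat) | cW (a i : nat).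

Definition valid (n d : nat) (c : coord) : Prop :=
  match c with
  | cX i j | cU i j => (i < n)%nat /\ (j < n)%nat
  | cV a j | cW a j => (a < d)%nat /\ (j < n)%nat
  end.

Definition get (s : St) (c : coord) : C :=
  match c with
  | cX i j => sX s i j | cU i j => sU s i j
  | cV a j => sV s a j | cW a i => sW s a i
  end.

Definition upd2 (A : nat -> nat -> C) (i j : nat) (u : C) : nat -> nat -> C :=
  fun a b => if andb (Nat.eqb a i) (Nat.eqb b j) then Cadd (A a b) u else A a b.

Definition shift (s : St) (c : coord) (u : C) : St :=
  match c with
  | cX i j => mkSt (upd2 (sX s) i j u) (sU s) (sV s) (sW s)
  | cU i j => mkSt (sX s) (upd2 (sU s) i j u) (sV s) (sW s)
  | cV a j => mkSt (sX s) (sU s) (upd2 (sV s) a j u) (sW s)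
  | cW a i => mkSt (sX s) (sU s) (sV s) (upd2 (sW s) a i u)
  end.

Definition sum_coords (n d : nat) (f : coord -> C) : C :=
  Cadd (Cadd (Csum n (fun a => Csum n (fun b => f (cX a b))))
             (Csum n (fun a => Csum n (fun b => f (cU a b)))))
       (Cadd (Csum d (fun a => Csum n (fun j => f (cV a j))))
             (Csum d (fun a => Csum n (fun i => f (cW a i))))).

Definition dlt (i j : nat) : C := if Nat.eqb i j then C1 else C0.
Definition o (a b : nat) : C :=
  if Nat.eqb a b then C0 else if Nat.ltb a b then C1 else Copp C1.

Definition MWv (n : nat) (M : Mat) (w : nat -> C) (i : nat) : C :=
  Csum n (fun l => Cmul (M i l) (w l)).
Definition VMv (n : nat) (v : nat -> C) (M : Mat) (j : nat) : C :=
  Csum n (fun l => Cmul (v l) (M l j)).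
Definition VW (n : nat) (v w : nat -> C) : C := Csum n (fun l => Cmul (v l) (w l)).

Definition brMW (n : nat) (M : Mat) (w : nat -> C) (i j k : nat) : C :=
  Cmul Chalf (Csub (Cmul (dlt k j) (MWv n M w i)) (Cmul (M k j) (w i))).
Definition brMV (n : nat) (M : Mat) (v : nat -> C) (i j l : nat) : C :=
  Cmul Chalf (Csub (Cmul (VMv n v M j) (dlt i l)) (Cmul (v j) (M i l))).
Definition brXU (isY : bool) (n : nat) (X U : Mat) (i j k l : nat) : C :=
  Cadd (if isY then Cmul (dlt k j) (dlt i l) else C0)
       (Cmul Chalf
          (Cadd (Cadd (Cmul (Mmul n U X k j) (dlt i l)) (Cmul (dlt k j) (Mmul n X U i l)))
                (Csub (Cmul (U k j) (X i l)) (Cmul (X k j) (U i l))))).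
Definition brVW (n : nat) (s : St) (a j b k : nat) : C :=
  Cadd (Cmul (dlt a b)
             (Cadd (Cadd (dlt k j) (Cmul Chalf (Cmul (sW s a k) (sV s a j))))
                   (Cmul Chalf (Cmul (dlt k j) (VW n (sV s a) (sW s a))))))
       (Cmul (Cmul Chalf (o a b))
             (Cadd (Cmul (dlt k j) (VW n (sV s a) (sW s b))) (Cmul (sW s b k) (sV s a j)))).

(* {c1, c2} evaluated at the point s; isY selects the space C (true) or C^x (false) *)
Definition pb (isY : bool) (n : nat) (s : St) (c1 c2 : coord) : C :=
  let X := sX s in let U := sU s in
  match c1, c2 with
  | cX i j, cX k l =>
      Cmul Chalf (Csub (Cmul (dlt i l) (Mmul n X X k j)) (Cmul (dlt k j) (Mmul n X X i l)))
  | cU i j, cU k l =>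
      Cmul Chalf (Csub (Cmul (dlt k j) (Mmul n U U i l)) (Cmul (dlt i l) (Mmul n U U k j)))
  | cX i j, cU k l => brXU isY n X U i j k l
  | cU k l, cX i j => Copp (brXU isY n X U i j k l)
  | cX i j, cW a k => brMW n X (sW s a) i j k
  | cU i j, cW a k => brMW n U (sW s a) i j k
  | cW a k, cX i j => Copp (brMW n X (sW s a) i j k)
  | cW a k, cU i j => Copp (brMW n U (sW s a) i j k)
  | cX i j, cV a l => brMV n X (sV s a) i j l
  | cU i j, cV a l => brMV n U (sV s a) i j l
  | cV a l, cX i j => Copp (brMV n X (sV s a) i j l)
  | cV a l, cU i j => Copp (brMV n U (sV s a) i j l)
  | cV a j, cV b l =>
      Cmul (Cmul Chalf (o b a))
           (Cadd (Cmul (sV s b j) (sV s a l)) (Cmul (sV s a j) (sV s b l)))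
  | cW a i, cW b k =>
      Cmul (Cmul Chalf (o b a))
           (Cadd (Cmul (sW s b k) (sW s a i)) (Cmul (sW s a k) (sW s b i)))
  | cV a j, cW b k => brVW n s a j b k
  | cW b k, cV a j => Copp (brVW n s a j b k)
  end.

Definition pd (H : St -> C) (s : St) (c : coord) : C :=
  epsilon (inhabits C0) (fun L => Cderiv (fun u => H (shift s c u)) C0 L).

(* {H, c}(s) = sum_{c'} dH/dc'(s) {c', c}(s)  (biderivation / Leibniz rule) *)
Definition HamVF (isY : bool) (n d : nat) (H : St -> C) (s : St) (c : coord) : C :=
  sum_coords n d (fun c' => Cmul (pd H s c') (pb isY n s c' c)).

(* gamma is an integral curve (defined for all complex times) of  dF/dt = {H, F} *)
Definition is_flow (isY : bool) (n d : nat) (H : St -> C) (gamma : C -> St) : Prop :=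
  forall t c, valid n d c ->
    Cderiv (fun t' => get (gamma t') c) t (HamVF isY n d H (gamma t) c).

Definition stEq (n d : nat) (s1 s2 : St) : Prop :=
  forall c, valid n d c -> get s1 c = get s2 c.

Definition Htr (n k : nat) (s : St) : C := Cmul (Cinv (INC k)) (Mtr n (Mpow n (sU s) k)).

Definition flow1 (n k : nat) (s : St) (t : C) : St :=
  mkSt (Mmul n (sX s) (mexp n (Mscal (Copp t) (Mpow n (sU s) k)))) (sU s) (sV s) (sW s).

Definition flow2 (n k : nat) (s : St) (tau : C) : St :=
  mkSt (Madd (Mmul n (sX s) (mexp n (Mscal (Copp tau) (Mpow n (sU s) k))))
             (Yinv_expm1 n (sU s) k tau))
       (sU s) (sV s) (sW s).

Definition not_root_of_unity (q : C) : Prop :=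
  forall m, (m >= 1)%nat -> Cpow q m <> C1.

(* Main.v *)
Require Import Defs.
From Stdlib Require Import Reals Lra Lia Psatz ClassicalEpsilon FunctionalExtensionality Ring Field Factorial Arith.
From Stdlib Require Import Setoid Morphisms.
Require Import Defs.
Open Scope R_scope.

Lemma C_ext (z w : C) : Re z = Re w -> Im z = Im w -> z = w.
Proof. destruct z, w; simpl; intros; subst; reflexivity. Qed.

Lemma C_ring_theory : ring_theory C0 C1 Cadd Cmul Csub Copp (@eq C).
Proof. constructor; intros; apply C_ext; unfold Csub; simpl; ring. Qed.
Add Ring Cring : C_ring_theory.

Lemma C1_neq_C0 : C1 <> C0.
Proof. intro H. assert (Re C1 = Re C0) by (rewrite H; auto). simpl in *; lra. Qed.

Lemma Cnz_sq (z : C) : z <> C0 -> Re z ^ 2 + Im z ^ 2 <> 0.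
Proof.
  intros Hz Hs. apply Hz. destruct z as [a b]; simpl in *.
  assert (a = 0) by nra. assert (b = 0) by nra. subst. reflexivity.
Qed.

Lemma Cinv_l (z : C) : z <> C0 -> Cmul (Cinv z) z = C1.
Proof.
  intros Hz. pose proof (Cnz_sq z Hz). destruct z as [a b]; simpl in *.
  apply C_ext; simpl; field; simpl in H; replace (a*a+b*b) with (a^2+b^2) by ring; auto.
Qed.

Lemma C_field_theory : field_theory C0 C1 Cadd Cmul Csub Copp Cdiv Cinv (@eq C).
Proof.
  constructor.
  - exact C_ring_theory.
  - exact C1_neq_C0.
  - reflexivity.
  - exact Cinv_l.
Qed.
Add Field Cfield : C_field_theory.

Lemma Cnorm_ge0 z : 0 <= Cnorm z.
Proof. unfold Cnorm; apply sqrt_pos. Qed.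

Lemma Cnorm_sq z : Cnorm z * Cnorm z = Re z ^ 2 + Im z ^ 2.
Proof. unfold Cnorm. rewrite sqrt_sqrt; nra. Qed.

Lemma Cnorm_mul z w : Cnorm (Cmul z w) = Cnorm z * Cnorm w.
Proof.
  unfold Cnorm. rewrite <- sqrt_mult by nra. f_equal. destruct z, w; simpl; ring.
Qed.

Lemma Cnorm_C0 : Cnorm C0 = 0.
Proof. unfold Cnorm, C0; cbn [Re Im]. replace (0 ^ 2 + 0 ^ 2) with 0 by ring. apply sqrt_0. Qed.

Lemma Cnorm_eq0 z : Cnorm z = 0 -> z = C0.
Proof.
  intros H. pose proof (Cnorm_sq z). rewrite H in H0.
  destruct z as [a b]; simpl in *. apply C_ext; simpl; nra.
Qed.

Lemma Cnorm_triangle z w : Cnorm (Cadd z w) <= Cnorm z + Cnorm w.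
Proof.
  pose proof (Cnorm_sq z) as Hz. pose proof (Cnorm_sq w) as Hw.
  pose proof (Cnorm_sq (Cadd z w)) as Hzw.
  pose proof (Cnorm_ge0 z). pose proof (Cnorm_ge0 w). pose proof (Cnorm_ge0 (Cadd z w)).
  destruct z as [a b], w as [c d]; cbn [Cadd Re Im] in *.
  set (u := Cnorm (mkC a b)) in *. set (v := Cnorm (mkC c d)) in *.
  set (s := Cnorm (Cadd _ _)) in *.
  assert (a*c + b*d <= u*v).
  { destruct (Rle_dec (a*c+b*d) 0) as [Hl|Hl]; [nra|].
    apply Rsqr_incr_0_var; unfold Rsqr; [|nra].
    assert (u*u*(v*v) - (a*c+b*d)*(a*c+b*d) = (a*d-b*c)*(a*d-b*c)) by (rewrite Hz, Hw; ring).
    assert (u*v*(u*v) = u*u*(v*v)) by ring.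
    pose proof (Rle_0_sqr (a*d-b*c)). unfold Rsqr in *. lra. }
  apply Rsqr_incr_0_var; unfold Rsqr; nra.
Qed.

Lemma Cnorm_opp z : Cnorm (Copp z) = Cnorm z.
Proof. unfold Cnorm; simpl; f_equal; ring. Qed.

Lemma Cnorm_sub_sym z w : Cnorm (Csub z w) = Cnorm (Csub w z).
Proof. replace (Csub z w) with (Copp (Csub w z)) by ring. apply Cnorm_opp. Qed.

Lemma Cnorm_RC r : Cnorm (RC r) = Rabs r.
Proof. unfold Cnorm, RC; cbn [Re Im]. replace (r ^ 2 + 0 ^ 2) with (r*r) by ring. apply sqrt_Rsqr_abs. Qed.

Lemma Re_le z : Rabs (Re z) <= Cnorm z.
Proof.
  pose proof (Cnorm_sq z). pose proof (Cnorm_ge0 z).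
  apply Rsqr_incr_0_var; [|auto]. rewrite <- Rsqr_abs. unfold Rsqr. nra.
Qed.
Lemma Im_le z : Rabs (Im z) <= Cnorm z.
Proof.
  pose proof (Cnorm_sq z). pose proof (Cnorm_ge0 z).
  apply Rsqr_incr_0_var; [|auto]. rewrite <- Rsqr_abs. unfold Rsqr. nra.
Qed.
Lemma Cnorm_le_ReIm z : Cnorm z <= Rabs (Re z) + Rabs (Im z).
Proof.
  pose proof (Cnorm_sq z). pose proof (Cnorm_ge0 z).
  pose proof (Rabs_pos (Re z)). pose proof (Rabs_pos (Im z)).
  apply Rsqr_incr_0_var; [|nra]. unfold Rsqr.
  pose proof (Rsqr_abs (Re z)). pose proof (Rsqr_abs (Im z)). unfold Rsqr in *. nra.
Qed.

Lemma Cnorm_pow z p : Cnorm (Cpow z p) = Cnorm z ^ p.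
Proof.
  induction p; simpl.
  - unfold Cnorm, C1; cbn [Re Im]. replace (1 ^ 2 + 0 ^ 2) with 1 by ring. apply sqrt_1.
  - rewrite Cnorm_mul, IHp. reflexivity.
Qed.

Lemma Cnorm_INC m : Cnorm (INC m) = INR m.
Proof. unfold INC. rewrite Cnorm_RC. apply Rabs_right. apply Rle_ge, pos_INR. Qed.

Lemma INC_S m : INC (S m) = Cadd (INC m) C1.
Proof. unfold INC, RC, Cadd, C1; apply C_ext; cbn [Re Im]; [rewrite S_INR|]; ring. Qed.
Lemma INC_0 : INC 0 = C0.
Proof. apply C_ext; simpl; ring. Qed.

Lemma Cnorm_pos z : z <> C0 -> 0 < Cnorm z.
Proof. intros H. destruct (Cnorm_ge0 z); auto. exfalso; apply H, Cnorm_eq0; auto. Qed.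

Lemma Cnorm_inv z : z <> C0 -> Cnorm (Cinv z) = / Cnorm z.
Proof.
  intros H. pose proof (Cnorm_pos z H).
  assert (E: Cnorm (Cinv z) * Cnorm z = 1).
  { rewrite <- Cnorm_mul. rewrite Cinv_l by auto. unfold Cnorm, C1; cbn [Re Im].
    replace (1 ^ 2 + 0 ^ 2) with 1 by ring. apply sqrt_1. }
  apply (Rmult_eq_reg_r (Cnorm z)); [|lra]. rewrite E. field. lra.
Qed.

Ltac clear_bad := repeat match goal with
  | H : Ccv _ _ |- _ => clear H
  | H : Cderiv _ _ _ |- _ => clear H
  | H : Un_cv _ _ |- _ => clear H
  end.
Ltac lra2 := clear_bad; lra.

Lemma Cnorm_sub_tri a b c : Cnorm (Csub a b) <= Cnorm (Csub a c) + Cnorm (Csub c b).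
Proof. replace (Csub a b) with (Cadd (Csub a c) (Csub c b)) by ring. apply Cnorm_triangle. Qed.

Lemma Cnorm_small_eq a b : (forall e, e > 0 -> Cnorm (Csub a b) < e) -> a = b.
Proof.
  intros H. assert (Cnorm (Csub a b) = 0).
  { destruct (Cnorm_ge0 (Csub a b)) as [Hp|]; auto. specialize (H _ Hp). lra2. }
  apply Cnorm_eq0 in H0. replace a with (Cadd (Csub a b) b) by ring. rewrite H0. ring.
Qed.

Lemma Ccv_unique u l1 l2 : Ccv u l1 -> Ccv u l2 -> l1 = l2.
Proof.
  intros H1 H2. apply Cnorm_small_eq. intros e He.
  destruct (H1 (e/2)) as [N1 HN1]; [lra2|].
  destruct (H2 (e/2)) as [N2 HN2]; [lra2|].
  specialize (HN1 (max N1 N2) ltac:(lia)); specialize (HN2 (max N1 N2) ltac:(lia)).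
  pose proof (Cnorm_sub_tri l1 l2 (u (max N1 N2))) as H.
  rewrite (Cnorm_sub_sym l1 (u _)) in H; lra2.
Qed.

Lemma Ccv_add u v l1 l2 : Ccv u l1 -> Ccv v l2 -> Ccv (fun m => Cadd (u m) (v m)) (Cadd l1 l2).
Proof.
  intros H1 H2 e He. destruct (H1 (e/2)) as [N1 HN1]; [lra2|].
  destruct (H2 (e/2)) as [N2 HN2]; [lra2|]. exists (max N1 N2). intros m Hm.
  specialize (HN1 m ltac:(lia)); specialize (HN2 m ltac:(lia)).
  replace (Csub (Cadd (u m) (v m)) (Cadd l1 l2)) with (Cadd (Csub (u m) l1) (Csub (v m) l2)) by ring.
  pose proof (Cnorm_triangle (Csub (u m) l1) (Csub (v m) l2)). lra2.
Qed.

Lemma Ccv_scal c u l : Ccv u l -> Ccv (fun m => Cmul c (u m)) (Cmul c l).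
Proof.
  intros H e He. destruct (H (e / (Cnorm c + 1))) as [N HN].
  { apply Rdiv_lt_0_compat; [lra2|]. pose proof (Cnorm_ge0 c); lra2. }
  exists N. intros m Hm. specialize (HN m Hm).
  replace (Csub (Cmul c (u m)) (Cmul c l)) with (Cmul c (Csub (u m) l)) by ring.
  rewrite Cnorm_mul. pose proof (Cnorm_ge0 c). pose proof (Cnorm_ge0 (Csub (u m) l)).
  apply Rle_lt_trans with ((Cnorm c + 1) * Cnorm (Csub (u m) l)); [nra|].
  apply Rmult_lt_reg_l with (/ (Cnorm c + 1)). apply Rinv_0_lt_compat; lra2.
  rewrite <- Rmult_assoc, Rinv_l by lra2. lra2.
Qed.

Lemma Ccv_const l : Ccv (fun _ => l) l.
Proof. intros e He. exists O. intros. replace (Csub l l) with C0 by ring. rewrite Cnorm_C0; lra2. Qed.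

Lemma Ccv_ext u v l : (forall m, u m = v m) -> Ccv u l -> Ccv v l.
Proof. intros H. replace v with u; auto. apply functional_extensionality; auto. Qed.

Lemma Ccv_opp u l : Ccv u l -> Ccv (fun m => Copp (u m)) (Copp l).
Proof.
  intros H. apply (Ccv_ext (fun m => Cmul (Copp C1) (u m))). intros; ring.
  replace (Copp l) with (Cmul (Copp C1) l) by ring. apply Ccv_scal; auto.
Qed.

Lemma Ccv_sub u v l1 l2 : Ccv u l1 -> Ccv v l2 -> Ccv (fun m => Csub (u m) (v m)) (Csub l1 l2).
Proof. intros. apply Ccv_add; auto. apply Ccv_opp; auto. Qed.

Lemma Ccv_shift u l : Ccv (fun m => u (S m)) l -> Ccv u l.
Proof. intros H e He. destruct (H e He) as [N HN]. exists (S N). intros m Hm.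
  destruct m; [lia|]. apply HN; lia. Qed.

Lemma Ccv_shift' u l : Ccv u l -> Ccv (fun m => u (S m)) l.
Proof. intros H e He. destruct (H e He) as [N HN]. exists N. intros m Hm. apply HN; lia. Qed.

Lemma Ccv_Csum n (f : nat -> nat -> C) (L : nat -> C) :
  (forall l, (l < n)%nat -> Ccv (fun m => f m l) (L l)) ->
  Ccv (fun m => Csum n (fun l => f m l)) (Csum n L).
Proof.
  induction n; intros H; simpl.
  - apply Ccv_const.
  - apply Ccv_add. apply IHn; intros; apply H; lia. apply H; lia.
Qed.

Lemma Ccv_bound u l B : (forall m, Cnorm (u m) <= B) -> Ccv u l -> Cnorm l <= B.
Proof.
  intros Hb H. apply Rnot_lt_le. intro Hlt.
  destruct (H (Cnorm l - B)) as [N HN]; [lra2|]. specialize (HN N (le_n _)).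
  specialize (Hb N).
  pose proof (Cnorm_triangle (u N) (Csub l (u N))).
  replace (Cadd (u N) (Csub l (u N))) with l in H0 by ring.
  rewrite Cnorm_sub_sym in HN. lra2.
Qed.

Lemma Ccv_ReIm u l : Un_cv (fun m => Re (u m)) (Re l) -> Un_cv (fun m => Im (u m)) (Im l) -> Ccv u l.
Proof.
  intros H1 H2 e He. destruct (H1 (e/2)) as [N1 HN1]; [lra2|].
  destruct (H2 (e/2)) as [N2 HN2]; [lra2|]. exists (max N1 N2). intros m Hm.
  specialize (HN1 m ltac:(lia)); specialize (HN2 m ltac:(lia)). unfold R_dist in *.
  pose proof (Cnorm_le_ReIm (Csub (u m) l)). unfold Csub, Cadd, Copp in *; cbn [Re Im] in *.
  unfold Rminus in *. lra2.
Qed.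

Fixpoint Rsum (m : nat) (f : nat -> R) : R :=
  match m with O => 0 | S m' => Rsum m' f + f m' end.

Lemma sum_f_R0_Rsum f m : sum_f_R0 f m = Rsum (S m) f.
Proof. induction m; simpl. ring. simpl in IHm. rewrite IHm. ring. Qed.

Lemma Re_Csum m f : Re (Csum m f) = Rsum m (fun p => Re (f p)).
Proof. induction m; simpl; auto. rewrite IHm; auto. Qed.
Lemma Im_Csum m f : Im (Csum m f) = Rsum m (fun p => Im (f p)).
Proof. induction m; simpl; auto. rewrite IHm; auto. Qed.

Lemma Cnorm_Csum m f : Cnorm (Csum m f) <= Rsum m (fun p => Cnorm (f p)).
Proof.
  induction m; simpl.
  - rewrite Cnorm_C0; lra2.
  - pose proof (Cnorm_triangle (Csum m f) (f m)). lra2.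
Qed.

Lemma Rsum_le m f g : (forall p, (p < m)%nat -> f p <= g p) -> Rsum m f <= Rsum m g.
Proof. induction m; simpl; intros. lra2. pose proof (H m ltac:(lia)). pose proof (IHm ltac:(intros; apply H; lia)). lra2. Qed.

Lemma Rsum_ext m f g : (forall p, (p < m)%nat -> f p = g p) -> Rsum m f = Rsum m g.
Proof. induction m; simpl; intros. lra2. rewrite H, IHm; auto. Qed.

Lemma Rsum_scal m c f : Rsum m (fun p => c * f p) = c * Rsum m f.
Proof. induction m; simpl. ring. rewrite IHm; ring. Qed.

Lemma Rsum_nonneg m f : (forall p, 0 <= f p) -> 0 <= Rsum m f.
Proof. induction m; simpl; intros. lra2. pose proof (H m). pose proof (IHm H). lra2. Qed.

Lemma real_series_conv (a c : nat -> R) L : (forall p, Rabs (a p) <= c p) ->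
  Un_cv (fun N => sum_f_R0 c N) L -> exists l, Un_cv (fun N => sum_f_R0 a N) l.
Proof.
  intros Hb Hc.
  destruct (Rseries_CV_comp (fun p => a p + c p) (fun p => 2 * c p)) as [l Hl].
  { intros p. pose proof (Hb p). pose proof (Rabs_pos (a p)).
    pose proof (Rle_abs (a p)). pose proof (Rle_abs (- a p)). rewrite Rabs_Ropp in *. lra2. }
  { exists (2 * L). apply (Un_cv_ext (fun N => 2 * sum_f_R0 c N)).
    intros; rewrite scal_sum; apply sum_eq; intros; ring.
    apply CV_mult; auto. intros e He. exists O; intros. unfold R_dist. rewrite Rminus_diag, Rabs_R0; lra2. }
  exists (l - L). apply (Un_cv_ext (fun N => sum_f_R0 (fun p => a p + c p) N - sum_f_R0 c N)).
  intros. rewrite <- minus_sum. apply sum_eq; intros; ring.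
  apply CV_minus; auto.
Qed.

Lemma exp_series_cv K x : Un_cv (fun N => sum_f_R0 (fun p => K * (x ^ p / INR (fact p))) N) (K * exp x).
Proof.
  apply (Un_cv_ext (fun N => K * E1 x N)).
  intros; unfold E1; rewrite scal_sum; apply sum_eq; intros; unfold Rdiv; ring.
  apply CV_mult. intros e He. exists O; intros. unfold R_dist. rewrite Rminus_diag, Rabs_R0; lra2.
  apply E1_cvg.
Qed.

Lemma series_conv (b : nat -> C) K x :
  (forall p, Cnorm (b p) <= K * (x ^ p / INR (fact p))) ->
  exists l, Ccv (fun m => Csum m b) l.
Proof.
  intros Hb.
  destruct (real_series_conv (fun p => Re (b p)) _ _ (fun p => Rle_trans _ _ _ (Re_le (b p)) (Hb p))
              (exp_series_cv K x)) as [lr Hr].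
  destruct (real_series_conv (fun p => Im (b p)) _ _ (fun p => Rle_trans _ _ _ (Im_le (b p)) (Hb p))
              (exp_series_cv K x)) as [li Hi].
  exists (mkC lr li). apply Ccv_shift. apply Ccv_ReIm; simpl.
  - apply (Un_cv_ext (fun N => sum_f_R0 (fun p => Re (b p)) N)); auto.
    intros; rewrite Re_Csum, sum_f_R0_Rsum; auto.
  - apply (Un_cv_ext (fun N => sum_f_R0 (fun p => Im (b p)) N)); auto.
    intros; rewrite Im_Csum, sum_f_R0_Rsum; auto.
Qed.

Lemma exp_partial_le x m : 0 <= x -> Rsum m (fun p => x ^ p / INR (fact p)) <= exp x.
Proof.
  intros Hx. destruct m. simpl. pose proof (exp_pos x); lra2.
  replace (Rsum (S m) (fun p => x ^ p / INR (fact p))) with (E1 x m).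
  - apply growing_ineq. intro N. unfold E1. cbn [sum_f_R0].
    assert (0 <= / INR (fact (S N)) * x ^ S N).
    { apply Rmult_le_pos. left; apply Rinv_0_lt_compat, INR_fact_lt_0. apply pow_le; auto. }
    lra2. apply E1_cvg.
  - unfold E1. rewrite sum_f_R0_Rsum. apply Rsum_ext; intros; unfold Rdiv; ring.
Qed.

Lemma Cnorm_div a b : b <> C0 -> Cnorm (Cdiv a b) = Cnorm a / Cnorm b.
Proof. intros. unfold Cdiv. rewrite Cnorm_mul, Cnorm_inv; auto. Qed.

Lemma Cderiv_unique f t L1 L2 : Cderiv f t L1 -> Cderiv f t L2 -> L1 = L2.
Proof.
  intros H1 H2. apply Cnorm_small_eq. intros e He.
  destruct (H1 (e/2)) as [d1 [Hd1 K1]]; [lra2|].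
  destruct (H2 (e/2)) as [d2 [Hd2 K2]]; [lra2|].
  set (h := RC (Rmin d1 d2 / 2)).
  assert (Hh0 : h <> C0).
  { intro E. assert (Re h = 0) by (rewrite E; reflexivity). unfold h in H; simpl in H.
    pose proof (Rmin_glb_lt d1 d2 0 Hd1 Hd2). lra2. }
  assert (Hn : Cnorm h < d1 /\ Cnorm h < d2).
  { unfold h. rewrite Cnorm_RC. pose proof (Rmin_glb_lt d1 d2 0 Hd1 Hd2).
    rewrite Rabs_right by lra2. pose proof (Rmin_l d1 d2). pose proof (Rmin_r d1 d2). lra2. }
  specialize (K1 h Hh0 (proj1 Hn)). specialize (K2 h Hh0 (proj2 Hn)).
  set (q := Cdiv (Csub (f (Cadd t h)) (f t)) h) in *.
  pose proof (Cnorm_sub_tri L1 L2 q). rewrite (Cnorm_sub_sym L1 q) in H. lra2.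
Qed.

Lemma Cderiv_ext f g t L : (forall u, f u = g u) -> Cderiv f t L -> Cderiv g t L.
Proof. intros H. replace g with f; auto. apply functional_extensionality; auto. Qed.

Lemma Cderiv_const c t : Cderiv (fun _ => c) t C0.
Proof.
  intros e He. exists 1. split; [lra|]. intros h Hh _.
  replace (Csub (Cdiv (Csub c c) h) C0) with C0 by (field; auto). rewrite Cnorm_C0. lra.
Qed.

Lemma Cderiv_add f g t L1 L2 : Cderiv f t L1 -> Cderiv g t L2 ->
  Cderiv (fun u => Cadd (f u) (g u)) t (Cadd L1 L2).
Proof.
  intros H1 H2 e He.
  destruct (H1 (e/2)) as [d1 [Hd1 K1]]; [lra2|].
  destruct (H2 (e/2)) as [d2 [Hd2 K2]]; [lra2|].
  exists (Rmin d1 d2). split. apply Rmin_glb_lt; auto.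
  intros h Hh Hn. pose proof (Rmin_l d1 d2). pose proof (Rmin_r d1 d2).
  specialize (K1 h Hh ltac:(lra2)). specialize (K2 h Hh ltac:(lra2)).
  replace (Csub (Cdiv (Csub (Cadd (f (Cadd t h)) (g (Cadd t h))) (Cadd (f t) (g t))) h) (Cadd L1 L2))
    with (Cadd (Csub (Cdiv (Csub (f (Cadd t h)) (f t)) h) L1) (Csub (Cdiv (Csub (g (Cadd t h)) (g t)) h) L2))
    by (field; auto).
  pose proof (Cnorm_triangle (Csub (Cdiv (Csub (f (Cadd t h)) (f t)) h) L1) (Csub (Cdiv (Csub (g (Cadd t h)) (g t)) h) L2)).
  lra2.
Qed.

Lemma Cderiv_scal c f t L : Cderiv f t L -> Cderiv (fun u => Cmul c (f u)) t (Cmul c L).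
Proof.
  intros H e He. destruct (H (e / (Cnorm c + 1))) as [d [Hd K]].
  { pose proof (Cnorm_ge0 c). apply Rdiv_lt_0_compat; lra2. }
  exists d. split; auto. intros h Hh Hn. specialize (K h Hh Hn).
  replace (Csub (Cdiv (Csub (Cmul c (f (Cadd t h))) (Cmul c (f t))) h) (Cmul c L))
    with (Cmul c (Csub (Cdiv (Csub (f (Cadd t h)) (f t)) h) L)) by (field; auto).
  rewrite Cnorm_mul. set (z := Cnorm (Csub _ _)) in *. pose proof (Cnorm_ge0 c).
  assert (0 <= z) by apply Cnorm_ge0.
  apply Rle_lt_trans with ((Cnorm c + 1) * z); [nra|].
  apply Rmult_lt_reg_l with (/ (Cnorm c + 1)). apply Rinv_0_lt_compat; lra2.
  rewrite <- Rmult_assoc, Rinv_l by lra2. lra2.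
Qed.

Lemma Cderiv_Csum n (f : nat -> C -> C) (L : nat -> C) t :
  (forall l, (l < n)%nat -> Cderiv (f l) t (L l)) ->
  Cderiv (fun u => Csum n (fun l => f l u)) t (Csum n L).
Proof.
  induction n; intros H; simpl.
  - apply Cderiv_const.
  - apply (Cderiv_add (fun u => Csum n (fun l => f l u)) (f n)).
    apply IHn; intros; apply H; lia. apply H; lia.
Qed.

Lemma Cderiv_cont f t L : Cderiv f t L -> forall e, e > 0 -> exists d, d > 0 /\
  forall h, Cnorm h < d -> Cnorm (Csub (f (Cadd t h)) (f t)) < e.
Proof.
  intros H e He. destruct (H 1) as [d [Hd K]]; [lra2|].
  exists (Rmin d (e / (Cnorm L + 2))). split.
  { apply Rmin_glb_lt; auto. pose proof (Cnorm_ge0 L). apply Rdiv_lt_0_compat; lra2. }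
  intros h Hn. pose proof (Rmin_l d (e / (Cnorm L + 2))). pose proof (Rmin_r d (e / (Cnorm L + 2))).
  destruct (classic (h = C0)) as [E|E].
  - subst. replace (Cadd t C0) with t by ring. replace (Csub (f t) (f t)) with C0 by ring.
    rewrite Cnorm_C0; lra2.
  - specialize (K h E ltac:(lra2)).
    replace (Csub (f (Cadd t h)) (f t)) with (Cmul h (Cadd (Csub (Cdiv (Csub (f (Cadd t h)) (f t)) h) L) L))
      by (field; auto).
    rewrite Cnorm_mul. pose proof (Cnorm_triangle (Csub (Cdiv (Csub (f (Cadd t h)) (f t)) h) L) L).
    set (z := Cnorm (Cadd _ _)) in *. pose proof (Cnorm_ge0 h). pose proof (Cnorm_ge0 L).
    assert (z <= Cnorm L + 1) by lra2.
    assert (Cnorm h * (Cnorm L + 2) < e).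
    { apply Rlt_le_trans with (e / (Cnorm L + 2) * (Cnorm L + 2)).
      apply Rmult_lt_compat_r; lra2. right; field; lra2. }
    assert (0 <= z) by apply Cnorm_ge0. nra.
Qed.

Lemma small_prod a b B e : 0 <= B -> Cnorm a <= B -> Cnorm b < e / (B + 1) -> e > 0 -> Cnorm (Cmul a b) < e.
Proof.
  intros HB Ha Hb He. rewrite Cnorm_mul. pose proof (Cnorm_ge0 a). pose proof (Cnorm_ge0 b).
  apply Rle_lt_trans with ((B+1) * Cnorm b). nra.
  apply Rlt_le_trans with ((B+1) * (e / (B+1))). apply Rmult_lt_compat_l; lra2.
  right; field; lra2.
Qed.

Lemma Cderiv_mul f g t L1 L2 : Cderiv f t L1 -> Cderiv g t L2 ->
  Cderiv (fun u => Cmul (f u) (g u)) t (Cadd (Cmul L1 (g t)) (Cmul (f t) L2)).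
Proof.
  intros H1 H2 e He.
  set (Bg := Cnorm (g t) + 1). set (B1 := Cnorm L1). set (Bf := Cnorm (f t)).
  assert (0 <= Bg) by (pose proof (Cnorm_ge0 (g t)); unfold Bg; lra2).
  assert (0 <= B1) by apply Cnorm_ge0. assert (0 <= Bf) by apply Cnorm_ge0.
  destruct (H1 ((e/3) / (Bg + 1))) as [d1 [Hd1 K1]].
  { apply Rdiv_lt_0_compat; lra2. }
  destruct (H2 ((e/3) / (Bf + 1))) as [d2 [Hd2 K2]].
  { apply Rdiv_lt_0_compat; lra2. }
  destruct (Cderiv_cont g t L2 H2 (Rmin 1 ((e/3) / (B1 + 1)))) as [d3 [Hd3 K3]].
  { apply Rmin_glb_lt; [lra2|]. apply Rdiv_lt_0_compat; lra2. }
  exists (Rmin d1 (Rmin d2 d3)). split. repeat apply Rmin_glb_lt; auto.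
  intros h Hh Hn.
  pose proof (Rmin_l d1 (Rmin d2 d3)). pose proof (Rmin_r d1 (Rmin d2 d3)).
  pose proof (Rmin_l d2 d3). pose proof (Rmin_r d2 d3).
  specialize (K1 h Hh ltac:(lra2)). specialize (K2 h Hh ltac:(lra2)). specialize (K3 h ltac:(lra2)).
  pose proof (Rmin_l 1 ((e/3) / (B1 + 1))). pose proof (Rmin_r 1 ((e/3) / (B1 + 1))).
  set (qf := Csub (Cdiv (Csub (f (Cadd t h)) (f t)) h) L1) in *.
  set (qg := Csub (Cdiv (Csub (g (Cadd t h)) (g t)) h) L2) in *.
  set (dg := Csub (g (Cadd t h)) (g t)) in *.
  replace (Csub (Cdiv (Csub (Cmul (f (Cadd t h)) (g (Cadd t h))) (Cmul (f t) (g t))) h)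
              (Cadd (Cmul L1 (g t)) (Cmul (f t) L2)))
    with (Cadd (Cadd (Cmul (g (Cadd t h)) qf) (Cmul L1 dg)) (Cmul (f t) qg))
    by (unfold qf, qg, dg; field; auto).
  assert (Cnorm (g (Cadd t h)) <= Bg).
  { replace (g (Cadd t h)) with (Cadd (g t) dg) by (unfold dg; ring).
    pose proof (Cnorm_triangle (g t) dg). unfold Bg; lra2. }
  pose proof (small_prod (g (Cadd t h)) qf Bg (e/3) ltac:(auto) ltac:(auto) ltac:(auto) ltac:(lra2)).
  pose proof (small_prod L1 dg B1 (e/3) ltac:(auto) ltac:(unfold B1; lra2) ltac:(lra2) ltac:(lra2)).
  pose proof (small_prod (f t) qg Bf (e/3) ltac:(auto) ltac:(unfold Bf; lra2) ltac:(auto) ltac:(lra2)).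
  pose proof (Cnorm_triangle (Cadd (Cmul (g (Cadd t h)) qf) (Cmul L1 dg)) (Cmul (f t) qg)).
  pose proof (Cnorm_triangle (Cmul (g (Cadd t h)) qf) (Cmul L1 dg)).
  lra2.
Qed.

Lemma RC_add_mul s h t : Cadd (Cmul (RC s) t) (Cmul (RC h) t) = Cmul (RC (s + h)) t.
Proof. apply C_ext; destruct t; simpl; ring. Qed.

Lemma Cderiv_zero_const (G : C -> C) : (forall t, Cderiv G t C0) -> forall t, G t = G C0.
Proof.
  intros HG t. destruct (classic (t = C0)) as [Et|Et]; [subst; auto|].
  pose proof (Cnorm_pos t Et) as HT.
  assert (Hd : forall (P : C -> R), (forall z, Rabs (P z) <= Cnorm z) -> (forall a b, P (Csub a b) = P a - P b) ->
             forall s, derivable_pt_lim (fun s => P (G (Cmul (RC s) t))) s 0).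
  { intros P HP HPs s e He.
    destruct (HG (Cmul (RC s) t) (e / Cnorm t)) as [d [Hd K]].
    { apply Rdiv_lt_0_compat; lra2. }
    assert (Hdp : 0 < d / Cnorm t) by (apply Rdiv_lt_0_compat; lra2).
    exists (mkposreal _ Hdp). simpl. intros h Hh Hhn.
    set (hh := Cmul (RC h) t).
    assert (Hhh : hh <> C0).
    { intro E. apply Hh. assert (Cnorm hh = 0) by (rewrite E; apply Cnorm_C0).
      unfold hh in H; rewrite Cnorm_mul, Cnorm_RC in H. apply Rmult_integral in H.
      destruct H as [H|H]; [|lra2]. destruct (Req_dec h 0); auto. pose proof (Rabs_pos_lt h H0). lra2. }
    assert (Hn : Cnorm hh < d).
    { unfold hh; rewrite Cnorm_mul, Cnorm_RC.
      apply Rlt_le_trans with (d / Cnorm t * Cnorm t). apply Rmult_lt_compat_r; lra2.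
      right; field; lra2. }
    specialize (K hh Hhh Hn). unfold hh in K. rewrite RC_add_mul in K.
    replace (Csub (Cdiv (Csub (G (Cmul (RC (s + h)) t)) (G (Cmul (RC s) t))) (Cmul (RC h) t)) C0)
      with (Cdiv (Csub (G (Cmul (RC (s + h)) t)) (G (Cmul (RC s) t))) (Cmul (RC h) t)) in K by ring.
    rewrite Cnorm_div in K by auto. rewrite Cnorm_mul, Cnorm_RC in K.
    set (D := Csub (G (Cmul (RC (s + h)) t)) (G (Cmul (RC s) t))) in *.
    rewrite Rminus_0_r. unfold Rdiv. rewrite Rabs_mult, Rabs_inv, <- HPs.
    pose proof (HP D). pose proof (Rabs_pos_lt h Hh).
    assert (Cnorm D < e * Rabs h).
    { apply (Rmult_lt_compat_r (Rabs h * Cnorm t)) in K; [|nra].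
      replace (Cnorm D / (Rabs h * Cnorm t) * (Rabs h * Cnorm t)) with (Cnorm D) in K by (field; lra2).
      replace (e / Cnorm t * (Rabs h * Cnorm t)) with (e * Rabs h) in K by (field; lra2). auto. }
    apply Rle_lt_trans with (Cnorm D * / Rabs h). apply Rmult_le_compat_r. left; apply Rinv_0_lt_compat; lra2. auto.
    apply Rmult_lt_reg_r with (Rabs h); auto. rewrite Rmult_assoc, Rinv_l by lra2. lra2. }
  assert (Hc : forall (P : C -> R), (forall z, Rabs (P z) <= Cnorm z) -> (forall a b, P (Csub a b) = P a - P b) ->
             P (G t) = P (G C0)).
  { intros P HP HPs.
    set (g := fun s => P (G (Cmul (RC s) t))).
    assert (pr : derivable g) by (intro s; exists 0; apply (Hd P HP HPs s)).
    assert (Hcst : constant g).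
    { apply (null_derivative_1 g pr). intro x. apply derive_pt_eq_0. apply (Hd P HP HPs x). }
    specialize (Hcst 1 0). unfold g in Hcst.
    replace (Cmul (RC 1) t) with t in Hcst by (apply C_ext; destruct t; simpl; ring).
    replace (Cmul (RC 0) t) with C0 in Hcst by (apply C_ext; destruct t; simpl; ring). auto. }
  apply C_ext.
  - apply (Hc Re). apply Re_le. intros; simpl; ring.
  - apply (Hc Im). apply Im_le. intros; simpl; ring.
Qed.

Lemma Csum_ext m f g : (forall l, (l < m)%nat -> f l = g l) -> Csum m f = Csum m g.
Proof. induction m; simpl; intros; auto. rewrite IHm, H; auto. Qed.
Lemma Csum_add m f g : Csum m (fun l => Cadd (f l) (g l)) = Cadd (Csum m f) (Csum m g).
Proof. induction m; simpl. ring. rewrite IHm; ring. Qed.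
Lemma Csum_opp m f : Csum m (fun l => Copp (f l)) = Copp (Csum m f).
Proof. induction m; simpl. ring. rewrite IHm; ring. Qed.
Lemma Csum_scal_l m c f : Csum m (fun l => Cmul c (f l)) = Cmul c (Csum m f).
Proof. induction m; simpl. ring. rewrite IHm; ring. Qed.
Lemma Csum_scal_r m c f : Csum m (fun l => Cmul (f l) c) = Cmul (Csum m f) c.
Proof. induction m; simpl. ring. rewrite IHm; ring. Qed.
Lemma Csum_zero m f : (forall l, (l < m)%nat -> f l = C0) -> Csum m f = C0.
Proof. induction m; simpl; intros; auto. rewrite IHm, H; auto. ring. Qed.
Lemma Csum_swap m n f : Csum m (fun i => Csum n (fun j => f i j)) = Csum n (fun j => Csum m (fun i => f i j)).
Proof.
  induction m; simpl.
  - symmetry; apply Csum_zero; auto.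
  - rewrite IHm. rewrite <- Csum_add. reflexivity.
Qed.
Lemma Csum_shift m f : Csum (S m) f = Cadd (f O) (Csum m (fun q => f (S q))).
Proof. induction m; simpl. ring. simpl in IHm. rewrite IHm. ring. Qed.

Lemma dlt_sym i j : dlt i j = dlt j i.
Proof. unfold dlt. rewrite Nat.eqb_sym; auto. Qed.

Lemma Csum_dlt_l m j f : (j < m)%nat -> Csum m (fun l => Cmul (dlt l j) (f l)) = f j.
Proof.
  induction m; intros H; [lia|]. simpl. destruct (Nat.eq_dec j m).
  - subst. rewrite Csum_zero. unfold dlt. rewrite Nat.eqb_refl. ring.
    intros l Hl. unfold dlt. replace (Nat.eqb l m) with false. ring. symmetry; apply Nat.eqb_neq; lia.
  - rewrite IHm by lia. unfold dlt. replace (Nat.eqb m j) with false. ring. symmetry; apply Nat.eqb_neq; lia.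
Qed.
Lemma Csum_dlt_r m j f : (j < m)%nat -> Csum m (fun l => Cmul (f l) (dlt l j)) = f j.
Proof. intros. rewrite <- (Csum_dlt_l m j f) by auto. apply Csum_ext; intros; ring. Qed.
Lemma Csum_dlt_l' m j f : (j < m)%nat -> Csum m (fun l => Cmul (dlt j l) (f l)) = f j.
Proof. intros. rewrite <- (Csum_dlt_l m j f) by auto. apply Csum_ext; intros; rewrite dlt_sym; ring. Qed.
Lemma Csum_dlt_r' m j f : (j < m)%nat -> Csum m (fun l => Cmul (f l) (dlt j l)) = f j.
Proof. intros. rewrite <- (Csum_dlt_l m j f) by auto. apply Csum_ext; intros; rewrite dlt_sym; ring. Qed.

(* MEQ: a wrapped version of Meq usable for setoid rewriting *)
Record MEQ (n : nat) (A B : Mat) : Prop := mkMEQ { unMEQ : Meq n A B }.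
Lemma MEQ_intro n A B : (forall i j, (i < n)%nat -> (j < n)%nat -> A i j = B i j) -> MEQ n A B.
Proof. intros H; constructor; exact H. Qed.
Lemma MEQ_elim n A B i j : MEQ n A B -> (i < n)%nat -> (j < n)%nat -> A i j = B i j.
Proof. intros [H] Hi Hj; apply H; auto. Qed.
Lemma MEQ_Meq n A B : MEQ n A B <-> Meq n A B.
Proof. split. intros [H]; auto. intros H; constructor; auto. Qed.

#[global] Instance MEQ_equiv n : Equivalence (MEQ n).
Proof.
  constructor.
  - intro A; apply MEQ_intro; auto.
  - intros A B H; apply MEQ_intro; intros; symmetry; apply (MEQ_elim n A B); auto.
  - intros A B D H1 H2; apply MEQ_intro; intros; rewrite (MEQ_elim n A B), (MEQ_elim n B D); auto.
Qed.

#[global] Instance Mmul_proper n : Proper (MEQ n ==> MEQ n ==> MEQ n) (Mmul n).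
Proof.
  intros A A' HA B B' HB. apply MEQ_intro; intros i j Hi Hj. unfold Mmul. apply Csum_ext; intros l Hl.
  rewrite (MEQ_elim n A A'), (MEQ_elim n B B'); auto.
Qed.
#[global] Instance Madd_proper n : Proper (MEQ n ==> MEQ n ==> MEQ n) Madd.
Proof. intros A A' HA B B' HB. apply MEQ_intro; intros i j Hi Hj. unfold Madd.
  rewrite (MEQ_elim n A A'), (MEQ_elim n B B'); auto. Qed.
#[global] Instance Msub_proper n : Proper (MEQ n ==> MEQ n ==> MEQ n) Msub.
Proof. intros A A' HA B B' HB. apply MEQ_intro; intros i j Hi Hj. unfold Msub.
  rewrite (MEQ_elim n A A'), (MEQ_elim n B B'); auto. Qed.
#[global] Instance Mscal_proper n c : Proper (MEQ n ==> MEQ n) (Mscal c).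
Proof. intros A A' HA. apply MEQ_intro; intros i j Hi Hj. unfold Mscal.
  rewrite (MEQ_elim n A A'); auto. Qed.
#[global] Instance Mpow_proper n : Proper (MEQ n ==> eq ==> MEQ n) (Mpow n).
Proof. intros A A' HA p p' <-. induction p; simpl. reflexivity. apply Mmul_proper; auto. Qed.

Lemma Mmul_assoc_pt n A B D i j : Mmul n (Mmul n A B) D i j = Mmul n A (Mmul n B D) i j.
Proof.
  unfold Mmul.
  transitivity (Csum n (fun l => Csum n (fun m => Cmul (A i m) (Cmul (B m l) (D l j))))).
  - apply Csum_ext; intros. rewrite <- Csum_scal_r. apply Csum_ext; intros; ring.
  - rewrite Csum_swap. apply Csum_ext; intros. rewrite <- Csum_scal_l. auto.
Qed.
Lemma Mmul_assoc n A B D : Mmul n (Mmul n A B) D = Mmul n A (Mmul n B D).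
Proof.
  apply functional_extensionality; intro i; apply functional_extensionality; intro j. apply Mmul_assoc_pt.
Qed.

Lemma Mmul_id_l n A : MEQ n (Mmul n Mid A) A.
Proof. apply MEQ_intro; intros i j Hi Hj. unfold Mmul, Mid. apply (Csum_dlt_l' n i (fun l => A l j)); auto. Qed.
Lemma Mmul_id_r n A : MEQ n (Mmul n A Mid) A.
Proof. apply MEQ_intro; intros i j Hi Hj. unfold Mmul, Mid. apply (Csum_dlt_r n j (fun l => A i l)); auto. Qed.

Lemma Mmul_add_l n A B D : Mmul n (Madd A B) D = Madd (Mmul n A D) (Mmul n B D).
Proof.
  apply functional_extensionality; intro i; apply functional_extensionality; intro j.
  unfold Mmul, Madd. rewrite <- Csum_add. apply Csum_ext; intros; ring.
Qed.
Lemma Mmul_add_r n A B D : Mmul n D (Madd A B) = Madd (Mmul n D A) (Mmul n D B).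
Proof.
  apply functional_extensionality; intro i; apply functional_extensionality; intro j.
  unfold Mmul, Madd. rewrite <- Csum_add. apply Csum_ext; intros; ring.
Qed.
Lemma Mmul_sub_l n A B D : Mmul n (Msub A B) D = Msub (Mmul n A D) (Mmul n B D).
Proof.
  apply functional_extensionality; intro i; apply functional_extensionality; intro j.
  unfold Mmul, Msub. unfold Csub at 2. rewrite <- Csum_opp, <- Csum_add. apply Csum_ext; intros; unfold Csub; ring.
Qed.
Lemma Mmul_sub_r n A B D : Mmul n D (Msub A B) = Msub (Mmul n D A) (Mmul n D B).
Proof.
  apply functional_extensionality; intro i; apply functional_extensionality; intro j.
  unfold Mmul, Msub. unfold Csub at 2. rewrite <- Csum_opp, <- Csum_add. apply Csum_ext; intros; unfold Csub; ring.
Qed.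
Lemma Mmul_scal_l n c A B : Mmul n (Mscal c A) B = Mscal c (Mmul n A B).
Proof.
  apply functional_extensionality; intro i; apply functional_extensionality; intro j.
  unfold Mmul, Mscal. rewrite <- Csum_scal_l. apply Csum_ext; intros; ring.
Qed.
Lemma Mmul_scal_r n c A B : Mmul n A (Mscal c B) = Mscal c (Mmul n A B).
Proof.
  apply functional_extensionality; intro i; apply functional_extensionality; intro j.
  unfold Mmul, Mscal. rewrite <- Csum_scal_l. apply Csum_ext; intros; ring.
Qed.

Lemma Mpow_S_r n A p : MEQ n (Mpow n A (S p)) (Mmul n (Mpow n A p) A).
Proof.
  induction p; simpl.
  - rewrite Mmul_id_l, Mmul_id_r. reflexivity.
  - simpl in IHp. rewrite Mmul_assoc. apply Mmul_proper; [reflexivity|exact IHp].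
Qed.
Lemma Mpow_add n A a b : MEQ n (Mmul n (Mpow n A a) (Mpow n A b)) (Mpow n A (a + b)).
Proof.
  induction a; simpl. apply Mmul_id_l. rewrite Mmul_assoc, IHa. reflexivity.
Qed.
Lemma Mpow_comm n A a b : MEQ n (Mmul n (Mpow n A a) (Mpow n A b)) (Mmul n (Mpow n A b) (Mpow n A a)).
Proof. rewrite !Mpow_add. rewrite Nat.add_comm. reflexivity. Qed.
Lemma Mpow_comm1 n A b : MEQ n (Mmul n A (Mpow n A b)) (Mmul n (Mpow n A b) A).
Proof. rewrite <- Mpow_S_r. reflexivity. Qed.
Lemma Mpow_mul n A k p : MEQ n (Mpow n (Mpow n A k) p) (Mpow n A (k * p)).
Proof.
  induction p; simpl. rewrite Nat.mul_0_r. reflexivity.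
  rewrite IHp, Mpow_add. replace (k + k * p)%nat with (k * S p)%nat by lia. reflexivity.
Qed.
Lemma Mpow_scal n c A p : MEQ n (Mpow n (Mscal c A) p) (Mscal (Cpow c p) (Mpow n A p)).
Proof.
  induction p; simpl.
  - apply MEQ_intro; intros i j _ _. unfold Mscal. ring.
  - rewrite IHp. rewrite Mmul_scal_l, Mmul_scal_r. apply MEQ_intro; intros i j _ _. unfold Mscal. ring.
Qed.

Lemma Mpow_comm_gen n M A p : MEQ n (Mmul n M A) (Mmul n A M) -> MEQ n (Mmul n M (Mpow n A p)) (Mmul n (Mpow n A p) M).
Proof.
  intros H. induction p; simpl. rewrite Mmul_id_l, Mmul_id_r; reflexivity.
  rewrite <- Mmul_assoc, H, Mmul_assoc, IHp, Mmul_assoc. reflexivity.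
Qed.

Definition Minvertible' n A := exists B, MEQ n (Mmul n A B) Mid /\ MEQ n (Mmul n B A) Mid.
Lemma Minvertible'_iff n A : Minvertible' n A <-> Minvertible n A.
Proof.
  split; intros [B [H1 H2]]; exists B; split.
  - exact (proj1 (MEQ_Meq _ _ _) H1).
  - exact (proj1 (MEQ_Meq _ _ _) H2).
  - exact (proj2 (MEQ_Meq _ _ _) H1).
  - exact (proj2 (MEQ_Meq _ _ _) H2).
Qed.

Lemma Minv_spec n A : Minvertible n A -> MEQ n (Mmul n A (Minv n A)) Mid /\ MEQ n (Mmul n (Minv n A) A) Mid.
Proof. intros H. unfold Minv. pose proof (epsilon_spec (inhabits M0) _ H) as [E1 E2].
  split; apply MEQ_Meq; assumption. Qed.

Lemma inv_unique n A B D : MEQ n (Mmul n B A) Mid -> MEQ n (Mmul n A D) Mid -> MEQ n B D.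
Proof.
  intros H1 H2. rewrite <- (Mmul_id_r n B). rewrite <- H2. rewrite <- Mmul_assoc, H1, Mmul_id_l. reflexivity.
Qed.

Lemma Minv_eq n A B : MEQ n (Mmul n A B) Mid -> MEQ n (Mmul n B A) Mid -> MEQ n (Minv n A) B.
Proof.
  intros H1 H2. assert (Hi : Minvertible n A) by (apply Minvertible'_iff; exists B; auto).
  destruct (Minv_spec n A Hi). apply (inv_unique n A); auto.
Qed.

Lemma Minvertible_mul n A B : Minvertible n A -> Minvertible n B ->
  Minvertible n (Mmul n A B) /\ MEQ n (Minv n (Mmul n A B)) (Mmul n (Minv n B) (Minv n A)).
Proof.
  intros HA HB. destruct (Minv_spec n A HA) as [A1 A2]. destruct (Minv_spec n B HB) as [B1 B2].
  assert (E1 : MEQ n (Mmul n (Mmul n A B) (Mmul n (Minv n B) (Minv n A))) Mid).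
  { rewrite Mmul_assoc. rewrite <- (Mmul_assoc n B). rewrite B1, Mmul_id_l. auto. }
  assert (E2 : MEQ n (Mmul n (Mmul n (Minv n B) (Minv n A)) (Mmul n A B)) Mid).
  { rewrite Mmul_assoc. rewrite <- (Mmul_assoc n (Minv n A)). rewrite A2, Mmul_id_l. auto. }
  split. apply Minvertible'_iff; exists (Mmul n (Minv n B) (Minv n A)); auto. apply Minv_eq; auto.
Qed.

Lemma Minvertible_MEQ n A B : MEQ n A B -> Minvertible n A -> Minvertible n B.
Proof. intros H HA. apply Minvertible'_iff in HA. apply Minvertible'_iff. destruct HA as [X [H1 H2]].
  exists X. rewrite <- H. auto. Qed.
Lemma Minv_MEQ n A B : MEQ n A B -> Minvertible n A -> MEQ n (Minv n A) (Minv n B).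
Proof.
  intros H HA. destruct (Minv_spec n A HA). symmetry. apply Minv_eq; rewrite <- H; auto.
Qed.

Definition psum (a : nat -> C) (t : C) (m : nat) : C := Csum m (fun p => Cmul (a p) (Cpow t p)).
Definition dcoef (a : nat -> C) (p : nat) : C := Cmul (INC (S p)) (a (S p)).

Lemma INR_fact_pos p : 0 < INR (fact p).
Proof. apply INR_fact_lt_0. Qed.

Lemma psum_conv a K R t : 0 <= K -> 0 <= R ->
  (forall p, Cnorm (a p) <= K * (R ^ p / INR (fact p))) -> exists l, Ccv (psum a t) l.
Proof.
  intros HK HR Ha. apply (series_conv _ K (R * Cnorm t)). intros p.
  rewrite Cnorm_mul, Cnorm_pow. rewrite Rpow_mult_distr.
  pose proof (pow_le (Cnorm t) p (Cnorm_ge0 t)). pose proof (Ha p).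
  pose proof (INR_fact_pos p).
  replace (K * (R ^ p * Cnorm t ^ p / INR (fact p))) with (K * (R ^ p / INR (fact p)) * Cnorm t ^ p) by (field; lra2).
  apply Rmult_le_compat_r; auto.
Qed.

Lemma dcoef_bound a K R : 0 <= K -> 0 <= R ->
  (forall p, Cnorm (a p) <= K * (R ^ p / INR (fact p))) ->
  forall p, Cnorm (dcoef a p) <= (K * R) * (R ^ p / INR (fact p)).
Proof.
  intros HK HR Ha p. unfold dcoef. rewrite Cnorm_mul, Cnorm_INC.
  pose proof (Ha (S p)). pose proof (INR_fact_pos p). pose proof (pos_INR (S p)).
  apply Rle_trans with (INR (S p) * (K * (R ^ S p / INR (fact (S p))))).
  apply Rmult_le_compat_l; auto.
  right. rewrite fact_simpl, mult_INR. assert (INR (S p) <> 0) by (rewrite S_INR; pose proof (pos_INR p); lra2).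
  simpl pow. field. split; lra2.
Qed.

Lemma nat_le_4pow p : INR p <= 3 * 4 ^ p.
Proof.
  induction p. simpl; lra. rewrite S_INR. simpl. pose proof (pow_le 4 p ltac:(lra)).
  assert (1 <= 4 ^ p) by (apply pow_R1_Rle; lra). lra.
Qed.

Definition Dp (t h : C) (p : nat) : C :=
  Csub (Csub (Cpow (Cadd t h) p) (Cpow t p)) (Cmul (Cmul (INC p) h) (Cpow t (pred p))).

Lemma Dp_rec t h p : Dp t h (S p) = Cadd (Cmul (Cadd t h) (Dp t h p)) (Cmul (Cmul (INC p) (Cmul h h)) (Cpow t (pred p))).
Proof.
  unfold Dp. destruct p.
  - simpl. rewrite (INC_S 0), INC_0. ring.
  - cbn [pred Cpow]. rewrite !INC_S. ring.
Qed.

Lemma Dp_bound t h p : Cnorm h <= 1 ->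
  Cnorm (Dp t h p) <= Cnorm h ^ 2 * (4 * (Cnorm t + 1)) ^ p.
Proof.
  intros Hh. set (T := Cnorm t) in *. set (H := Cnorm h) in *.
  assert (HT : 0 <= T) by apply Cnorm_ge0. assert (HH : 0 <= H) by apply Cnorm_ge0.
  induction p.
  - unfold Dp. simpl. rewrite INC_0. replace (Csub (Csub C1 C1) (Cmul (Cmul C0 h) C1)) with C0 by ring.
    rewrite Cnorm_C0. nra.
  - rewrite Dp_rec.
    pose proof (Cnorm_triangle (Cmul (Cadd t h) (Dp t h p)) (Cmul (Cmul (INC p) (Cmul h h)) (Cpow t (pred p)))).
    rewrite !Cnorm_mul, Cnorm_INC, Cnorm_pow in H0. fold T H in H0.
    pose proof (Cnorm_triangle t h). fold T H in H1.
    assert (Tp : T ^ pred p <= (T + 1) ^ p).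
    { destruct p. simpl; lra. simpl pred. apply Rle_trans with ((T+1)^p).
      apply pow_incr; lra. rewrite <- (Rmult_1_l ((T+1)^p)) at 1. simpl.
      apply Rmult_le_compat_r. apply pow_le; lra. lra. }
    pose proof (nat_le_4pow p). pose proof (pos_INR p).
    set (Y := (4 * (T + 1)) ^ p) in *.
    assert (HY : (T+1)^p <= Y).
    { unfold Y. apply pow_incr; lra. }
    assert (Hpow : 1 <= 4 ^ p) by (apply pow_R1_Rle; lra).
    assert (HY2 : Y = 4 ^ p * (T+1)^p) by (unfold Y; apply Rpow_mult_distr).
    assert (HTp : 0 <= (T+1)^p) by (apply pow_le; lra).
    assert (HTp' : 0 <= T ^ pred p) by (apply pow_le; lra).
    assert (Hc1 : Cnorm (Cadd t h) * Cnorm (Dp t h p) <= (T+1) * (H^2 * Y)).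
    { apply Rmult_le_compat; try apply Cnorm_ge0; lra2. }
    assert (Hc2 : INR p * (H * H) * T ^ pred p <= INR p * (H * H) * (T+1)^p).
    { apply Rmult_le_compat_l; [|auto]. apply Rmult_le_pos; nra. }
    assert (Hc3 : INR p * (T+1)^p <= 3 * (T+1) * Y).
    { rewrite HY2. assert (INR p * (T+1)^p <= 3 * 4^p * (T+1)^p) by (apply Rmult_le_compat_r; auto).
      assert (3 * 4^p * (T+1)^p <= 3 * (T+1) * (4^p * (T+1)^p)).
      { assert (0 <= 3 * 4^p * (T+1)^p) by nra. nra. }
      lra2. }
    replace ((4 * (T + 1)) ^ S p) with (4 * (T+1) * Y) by (unfold Y; simpl; ring).
    assert (HH2 : H^2 = H * H) by ring.
    assert (INR p * (H * H) * (T + 1) ^ p <= H^2 * (3 * (T+1) * Y)).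
    { rewrite HH2. replace (INR p * (H * H) * (T + 1) ^ p) with ((H*H) * (INR p * (T + 1) ^ p)) by ring.
      apply Rmult_le_compat_l; nra. }
    nra.
Qed.

Lemma Csum_sub m f g : Csum m (fun l => Csub (f l) (g l)) = Csub (Csum m f) (Csum m g).
Proof. induction m; simpl. ring. rewrite IHm; ring. Qed.

Lemma psum_diff a t h m :
  Csum (S m) (fun p => Cmul (a p) (Dp t h p)) =
  Csub (Csub (psum a (Cadd t h) (S m)) (psum a t (S m))) (Cmul h (psum (dcoef a) t m)).
Proof.
  assert (E : Cmul h (psum (dcoef a) t m) = Csum (S m) (fun p => Cmul (a p) (Cmul (Cmul (INC p) h) (Cpow t (pred p))))).
  { rewrite Csum_shift. rewrite INC_0. unfold psum. rewrite <- Csum_scal_l.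
    replace (Cmul (a 0%nat) (Cmul (Cmul C0 h) (Cpow t (pred 0)))) with C0 by ring.
    transitivity (Cadd C0 (Csum m (fun l => Cmul h (Cmul (dcoef a l) (Cpow t l))))); [ring|]. f_equal. apply Csum_ext; intros. unfold dcoef. simpl pred. ring. }
  rewrite E. unfold psum. rewrite <- !Csum_sub. apply Csum_ext; intros. unfold Dp. ring.
Qed.

Lemma psum_deriv a K R F G : 0 <= K -> 0 <= R ->
  (forall p, Cnorm (a p) <= K * (R ^ p / INR (fact p))) ->
  (forall t, Ccv (psum a t) (F t)) -> (forall t, Ccv (psum (dcoef a) t) (G t)) ->
  forall t, Cderiv F t (G t).
Proof.
  intros HK HR Ha HF HG t eps Heps.
  set (T := Cnorm t). assert (HT : 0 <= T) by apply Cnorm_ge0.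
  set (X := R * (4 * (T + 1))). assert (HX : 0 <= X) by (unfold X; nra).
  set (B := K * exp X). assert (HB : 0 <= B) by (unfold B; pose proof (exp_pos X); nra).
  exists (Rmin 1 (eps / (B + 1))). split.
  { apply Rmin_glb_lt. lra. apply Rdiv_lt_0_compat; lra2. }
  intros h Hh Hn. pose proof (Rmin_l 1 (eps / (B + 1))) as Hm1. pose proof (Rmin_r 1 (eps / (B + 1))) as Hm2.
  set (Hn' := Cnorm h) in *. assert (HH : 0 <= Hn') by apply Cnorm_ge0.
  set (L := Csub (Csub (F (Cadd t h)) (F t)) (Cmul h (G t))).
  assert (HL : Cnorm L <= Hn' ^ 2 * B).
  { apply (Ccv_bound (fun m => Csum (S m) (fun p => Cmul (a p) (Dp t h p)))).
    - intro m. eapply Rle_trans. apply Cnorm_Csum.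
      apply Rle_trans with (Rsum (S m) (fun p => K * Hn' ^ 2 * (X ^ p / INR (fact p)))).
      + apply Rsum_le. intros p _. rewrite Cnorm_mul. pose proof (Dp_bound t h p ltac:(unfold Hn' in *; lra2)).
        pose proof (Ha p). pose proof (INR_fact_pos p).
        apply Rle_trans with (K * (R ^ p / INR (fact p)) * (Cnorm h ^ 2 * (4 * (T + 1)) ^ p)).
        { apply Rmult_le_compat; try apply Cnorm_ge0; auto. }
        right. unfold X, Hn'. rewrite (Rpow_mult_distr R (4 * (T + 1)) p). field. lra2.
      + rewrite Rsum_scal. unfold B. replace (K * Hn' ^ 2) with (Hn' ^ 2 * K) by ring. rewrite Rmult_assoc.
        apply Rmult_le_compat_l. nra. apply Rmult_le_compat_l; auto. apply exp_partial_le; auto.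
    - apply (Ccv_ext (fun m => Csub (Csub (psum a (Cadd t h) (S m)) (psum a t (S m))) (Cmul h (psum (dcoef a) t m)))).
      intros; rewrite psum_diff; auto.
      apply Ccv_sub. apply Ccv_sub; apply Ccv_shift'; auto. apply Ccv_scal; auto. }
  replace (Csub (Cdiv (Csub (F (Cadd t h)) (F t)) h) (G t)) with (Cdiv L h) by (unfold L; field; auto).
  rewrite Cnorm_div by auto. fold Hn'.
  assert (Hp : 0 < Hn') by (apply Cnorm_pos; auto).
  apply Rle_lt_trans with (Hn' * B).
  { apply Rmult_le_reg_r with Hn'; auto. unfold Rdiv. rewrite Rmult_assoc, Rinv_l by lra2.
    replace (Hn' * B * Hn') with (Hn' ^ 2 * B) by ring. lra2. }
  apply Rle_lt_trans with (Hn' * (B + 1)). nra.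
  apply Rlt_le_trans with (eps / (B + 1) * (B + 1)). apply Rmult_lt_compat_r; lra2.
  right; field; lra2.
Qed.

Definition Nrm n (A : Mat) : R := Rsum n (fun i => Rsum n (fun j => Cnorm (A i j))).

Lemma Rsum_ge_term m f l : (forall p, 0 <= f p) -> (l < m)%nat -> f l <= Rsum m f.
Proof.
  induction m; intros H Hl. lia. simpl. destruct (Nat.eq_dec l m).
  - subst. pose proof (Rsum_nonneg m f H). lra.
  - pose proof (IHm H ltac:(lia)). pose proof (H m). lra.
Qed.

Lemma row_le_Nrm n A i : (i < n)%nat -> Rsum n (fun j => Cnorm (A i j)) <= Nrm n A.
Proof.
  intros Hi. unfold Nrm. apply (Rsum_ge_term n (fun i => Rsum n (fun j => Cnorm (A i j)))); auto.
  intros; apply Rsum_nonneg; intros; apply Cnorm_ge0.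
Qed.
Lemma entry_le_Nrm n A i j : (i < n)%nat -> (j < n)%nat -> Cnorm (A i j) <= Nrm n A.
Proof.
  intros Hi Hj. eapply Rle_trans; [|apply (row_le_Nrm n A i Hi)].
  apply (Rsum_ge_term n (fun j => Cnorm (A i j))); auto. intros; apply Cnorm_ge0.
Qed.
Lemma Nrm_ge0 n A : 0 <= Nrm n A.
Proof. unfold Nrm. apply Rsum_nonneg; intros; apply Rsum_nonneg; intros; apply Cnorm_ge0. Qed.

Lemma Rsum_scal_r m c f : Rsum m (fun p => f p * c) = Rsum m f * c.
Proof. induction m; simpl. ring. rewrite IHm; ring. Qed.

Lemma Mpow_bound n A p i j : (i < n)%nat -> (j < n)%nat -> Cnorm (Mpow n A p i j) <= (Nrm n A + 1) ^ p.
Proof.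
  revert i j. induction p; intros i j Hi Hj; simpl.
  - unfold Mid. destruct (Nat.eqb i j).
    + change C1 with (RC 1). rewrite Cnorm_RC, Rabs_R1. lra.
    + rewrite Cnorm_C0. lra.
  - unfold Mmul. eapply Rle_trans. apply Cnorm_Csum.
    pose proof (Nrm_ge0 n A).
    apply Rle_trans with (Rsum n (fun l => Cnorm (A i l) * (Nrm n A + 1) ^ p)).
    + apply Rsum_le; intros l Hl. rewrite Cnorm_mul. apply Rmult_le_compat_l. apply Cnorm_ge0. auto.
    + rewrite Rsum_scal_r. pose proof (row_le_Nrm n A i Hi).
      apply Rmult_le_compat_r. apply pow_le; lra. lra.
Qed.

Definition mconv n (a : nat -> Mat) (E : Mat) : Prop :=
  forall i j, (i < n)%nat -> (j < n)%nat -> Ccv (fun m => Csum m (fun p => a p i j)) (E i j).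

Lemma mconv_unique n a E1 E2 : mconv n a E1 -> mconv n a E2 -> MEQ n E1 E2.
Proof. intros H1 H2. apply MEQ_intro; intros i j Hi Hj. eapply Ccv_unique; [apply H1|apply H2]; auto. Qed.

Lemma mconv_mseries n a E : mconv n a E -> mconv n a (mseries n a).
Proof. intros H. unfold mseries. apply (epsilon_spec (inhabits M0) (fun E => mconv n a E)). exists E; auto. Qed.

Lemma mseries_eq n a E : mconv n a E -> MEQ n (mseries n a) E.
Proof. intros H. apply (mconv_unique n a); auto. apply (mconv_mseries n a E H). Qed.

Lemma mconv_exists n a : (forall i j, (i < n)%nat -> (j < n)%nat -> exists l, Ccv (fun m => Csum m (fun p => a p i j)) l) ->
  mconv n a (mseries n a).
Proof.
  intros H. apply (mconv_mseries n a (fun i j => epsilon (inhabits C0) (fun l => Ccv (fun m => Csum m (fun p => a p i j)) l))).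
  intros i j Hi Hj. apply (epsilon_spec (inhabits C0) (fun l => Ccv (fun m => Csum m (fun p => a p i j)) l)). auto.
Qed.

Lemma mconv_MEQ n a b E E' : (forall p, MEQ n (a p) (b p)) -> MEQ n E E' -> mconv n a E -> mconv n b E'.
Proof.
  intros Hab HE H i j Hi Hj. rewrite <- (MEQ_elim n E E' i j HE Hi Hj).
  apply (Ccv_ext (fun m => Csum m (fun p => a p i j))); auto.
  intros m; apply Csum_ext; intros p _; apply (MEQ_elim n); auto.
Qed.

Lemma mconv_mul_l n M a E : mconv n a E -> mconv n (fun p => Mmul n M (a p)) (Mmul n M E).
Proof.
  intros H i j Hi Hj. unfold Mmul.
  apply (Ccv_ext (fun m => Csum n (fun l => Cmul (M i l) (Csum m (fun p => a p l j))))).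
  intros m. rewrite Csum_swap. apply Csum_ext; intros. rewrite Csum_scal_l. auto.
  apply Ccv_Csum. intros l Hl. apply Ccv_scal. apply H; auto.
Qed.

Lemma mconv_mul_r n M a E : mconv n a E -> mconv n (fun p => Mmul n (a p) M) (Mmul n E M).
Proof.
  intros H i j Hi Hj. unfold Mmul.
  apply (Ccv_ext (fun m => Csum n (fun l => Cmul (M l j) (Csum m (fun p => a p i l))))).
  intros m. rewrite Csum_swap. apply Csum_ext; intros l _. rewrite <- Csum_scal_l. apply Csum_ext; intros; ring.
  replace (Csum n (fun l => Cmul (E i l) (M l j))) with (Csum n (fun l => Cmul (M l j) (E i l)))
    by (apply Csum_ext; intros; ring).
  apply Ccv_Csum. intros l Hl. apply Ccv_scal. apply H; auto.
Qed.

Lemma mconv_comm n M a E : (forall p, MEQ n (Mmul n M (a p)) (Mmul n (a p) M)) -> mconv n a E ->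
  MEQ n (Mmul n M E) (Mmul n E M).
Proof.
  intros Hc H. apply (mconv_unique n (fun p => Mmul n M (a p)) (Mmul n M E) (Mmul n E M)). apply mconv_mul_l; auto.
  apply (mconv_MEQ n (fun p => Mmul n (a p) M) _ (Mmul n E M)). intros; symmetry; auto. reflexivity. apply mconv_mul_r; auto.
Qed.

Lemma mconv_drop0 n a b E : mconv n a E -> MEQ n (b O) M0 -> (forall p, MEQ n (b (S p)) (a (S p))) ->
  mconv n b (Msub E (a O)).
Proof.
  intros H H0 Hs i j Hi Hj. apply Ccv_shift.
  apply (Ccv_ext (fun m => Csub (Csum (S m) (fun p => a p i j)) (a O i j))).
  { intros m. rewrite !Csum_shift. rewrite (MEQ_elim n _ _ i j H0 Hi Hj).
    unfold M0. rewrite (Csum_ext m (fun q => b (S q) i j) (fun q => a (S q) i j)).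
    ring. intros; apply (MEQ_elim n); auto. }
  unfold Msub. apply Ccv_sub. apply (Ccv_shift' (fun m => Csum m (fun p => a p i j))). apply H; auto. apply Ccv_const.
Qed.

Lemma Cpow_mul x y p : Cpow (Cmul x y) p = Cmul (Cpow x p) (Cpow y p).
Proof. induction p; simpl. ring. rewrite IHp; ring. Qed.

Lemma fact_INC p : Cmul (INC (S p)) (RC (/ INR (fact (S p)))) = RC (/ INR (fact p)).
Proof.
  unfold INC, RC, Cmul. apply C_ext; cbn [Re Im]; [|ring].
  rewrite fact_simpl, mult_INR. pose proof (INR_fact_pos p).
  assert (INR (S p) <> 0) by (rewrite S_INR; pose proof (pos_INR p); lra). field. split; lra.
Qed.

Lemma psum_C0 a : Ccv (psum a C0) (a O).
Proof.
  apply Ccv_shift. apply (Ccv_ext (fun _ => a O)); [|apply Ccv_const].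
  intros m. unfold psum. rewrite Csum_shift. rewrite Csum_zero. simpl. ring.
  intros; simpl; ring.
Qed.

Lemma Mmul_deriv n (P Q : C -> Mat) (P' Q' : Mat) i j t :
  (forall l, (l < n)%nat -> Cderiv (fun t => P t i l) t (P' i l)) ->
  (forall l, (l < n)%nat -> Cderiv (fun t => Q t l j) t (Q' l j)) ->
  Cderiv (fun t => Mmul n (P t) (Q t) i j) t
         (Csum n (fun l => Cadd (Cmul (P' i l) (Q t l j)) (Cmul (P t i l) (Q' l j)))).
Proof.
  intros HP HQ. unfold Mmul. apply (Cderiv_Csum n (fun l t => Cmul (P t i l) (Q t l j))).
  intros l Hl. apply (Cderiv_mul (fun t => P t i l) (fun t => Q t l j)); auto.
Qed.

Lemma Mmul_entry n X Y i j : Mmul n X Y i j = Csum n (fun l => Cmul (X i l) (Y l j)).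
Proof. reflexivity. Qed.

Definition EE n (B : Mat) (t : C) : Mat := mexp n (Mscal (Copp t) B).
Definition ea n (B : Mat) (t : C) (p : nat) : Mat :=
  Mscal (RC (/ INR (fact p))) (Mpow n (Mscal (Copp t) B) p).
Definition ecoef n (B : Mat) (i j : nat) (p : nat) : C :=
  Cmul (Cpow (Copp C1) p) (Cmul (RC (/ INR (fact p))) (Mpow n B p i j)).

Lemma ea_MEQ n B t p : MEQ n (ea n B t p) (Mscal (Cmul (RC (/ INR (fact p))) (Cpow (Copp t) p)) (Mpow n B p)).
Proof.
  unfold ea. rewrite Mpow_scal. apply MEQ_intro; intros; unfold Mscal; ring.
Qed.

Lemma ea_entry n B t p i j : (i < n)%nat -> (j < n)%nat -> ea n B t p i j = Cmul (ecoef n B i j p) (Cpow t p).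
Proof.
  intros Hi Hj. rewrite (MEQ_elim n _ _ i j (ea_MEQ n B t p) Hi Hj). unfold Mscal, ecoef.
  replace (Copp t) with (Cmul (Copp C1) t) by ring. rewrite Cpow_mul. ring.
Qed.

Lemma ecoef_bound n B i j p : (i < n)%nat -> (j < n)%nat ->
  Cnorm (ecoef n B i j p) <= 1 * ((Nrm n B + 1) ^ p / INR (fact p)).
Proof.
  intros Hi Hj. unfold ecoef. rewrite !Cnorm_mul, Cnorm_pow, Cnorm_opp, Cnorm_RC.
  change C1 with (RC 1). rewrite Cnorm_RC, Rabs_R1, pow1.
  pose proof (INR_fact_pos p). rewrite Rabs_right by (left; apply Rinv_0_lt_compat; auto).
  pose proof (Mpow_bound n B p i j Hi Hj).
  replace (1 * ((Nrm n B + 1) ^ p / INR (fact p))) with (1 * (/ INR (fact p) * (Nrm n B + 1) ^ p)) by (field; lra).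
  apply Rmult_le_compat_l. lra. apply Rmult_le_compat_l. left; apply Rinv_0_lt_compat; auto. auto.
Qed.

Lemma EE_conv n B t : mconv n (ea n B t) (EE n B t).
Proof.
  unfold EE, mexp. apply (mconv_exists n (ea n B t)).
  intros i j Hi Hj. pose proof (ecoef_bound n B i j).
  destruct (psum_conv (ecoef n B i j) 1 (Nrm n B + 1) t ltac:(lra) ltac:(pose proof (Nrm_ge0 n B); lra) ltac:(intro; auto)) as [l Hl].
  exists l. apply (Ccv_ext (psum (ecoef n B i j) t)); auto.
  intros m. unfold psum. apply Csum_ext; intros. rewrite ea_entry; auto.
Qed.

Lemma EE_entry_cv n B t i j : (i < n)%nat -> (j < n)%nat -> Ccv (psum (ecoef n B i j) t) (EE n B t i j).
Proof.
  intros Hi Hj. apply (Ccv_ext (fun m => Csum m (fun p => ea n B t p i j))).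
  intros m. unfold psum. apply Csum_ext; intros. rewrite ea_entry; auto.
  apply EE_conv; auto.
Qed.

Lemma EE_0 n B : MEQ n (EE n B C0) Mid.
Proof.
  apply MEQ_intro; intros i j Hi Hj. pose proof (EE_entry_cv n B C0 i j Hi Hj).
  pose proof (psum_C0 (ecoef n B i j)). rewrite (Ccv_unique _ _ _ H H0).
  unfold ecoef. simpl. rewrite Rinv_1. unfold Mid.
  destruct (Nat.eqb i j); apply C_ext; simpl; ring.
Qed.

Lemma EE_comm n M B t : MEQ n (Mmul n M B) (Mmul n B M) -> MEQ n (Mmul n M (EE n B t)) (Mmul n (EE n B t) M).
Proof.
  intros H. apply (mconv_comm n M (ea n B t)); [|apply EE_conv].
  intros p. rewrite ea_MEQ. rewrite Mmul_scal_l, Mmul_scal_r. apply Mscal_proper. apply Mpow_comm_gen; auto.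
Qed.

Lemma EE_deriv n B i j t : (i < n)%nat -> (j < n)%nat ->
  Cderiv (fun t => EE n B t i j) t (Copp (Mmul n B (EE n B t) i j)).
Proof.
  intros Hi Hj.
  apply (psum_deriv (ecoef n B i j) 1 (Nrm n B + 1) (fun t => EE n B t i j) (fun t => Copp (Mmul n B (EE n B t) i j))).
  lra. pose proof (Nrm_ge0 n B); lra. intro; apply ecoef_bound; auto.
  intro t0. apply EE_entry_cv; auto.
  intro t0. pose proof (mconv_mul_l n B (ea n B t0) (EE n B t0) (EE_conv n B t0) i j Hi Hj) as Hc.
  apply (Ccv_ext (fun m => Copp (Csum m (fun p => Mmul n B (ea n B t0 p) i j)))).
  - intros m. unfold psum. rewrite <- Csum_opp. apply Csum_ext; intros p _.
    assert (MEQ n (Mmul n B (ea n B t0 p)) (Mscal (Cmul (RC (/ INR (fact p))) (Cpow (Copp t0) p)) (Mpow n B (S p)))).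
    { rewrite ea_MEQ, Mmul_scal_r. reflexivity. }
    rewrite (MEQ_elim n _ _ i j H Hi Hj). unfold Mscal, dcoef, ecoef.
    rewrite <- (fact_INC p). replace (Copp t0) with (Cmul (Copp C1) t0) by ring. rewrite Cpow_mul.
    cbn [Cpow]. ring.
  - apply Ccv_opp. auto.
Qed.

Lemma EE_neg n B t : EE n B (Copp t) = EE n (Mscal (Copp C1) B) t.
Proof.
  unfold EE. f_equal. apply functional_extensionality; intro i; apply functional_extensionality; intro j.
  unfold Mscal. ring.
Qed.

Lemma Mscal_neg_neg B : Mscal (Copp C1) (Mscal (Copp C1) B) = B.
Proof.
  apply functional_extensionality; intro i; apply functional_extensionality; intro j. unfold Mscal. ring.
Qed.

Lemma EE_inv_l n B t : MEQ n (Mmul n (EE n B t) (EE n (Mscal (Copp C1) B) t)) Mid.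
Proof.
  set (B' := Mscal (Copp C1) B).
  apply MEQ_intro; intros i j Hi Hj.
  set (G := fun t => Mmul n (EE n B t) (EE n B' t) i j).
  assert (HG : forall t, Cderiv G t C0).
  { intro t0. eapply Cderiv_ext; [intro; reflexivity|].
    pose proof (Mmul_deriv n (EE n B) (EE n B') (fun a b => Copp (Mmul n B (EE n B t0) a b))
                   (fun a b => Copp (Mmul n B' (EE n B' t0) a b)) i j t0) as HD.
    assert (Hval : Csum n (fun l => Cadd (Cmul (Copp (Mmul n B (EE n B t0) i l)) (EE n B' t0 l j))
                                         (Cmul (EE n B t0 i l) (Copp (Mmul n B' (EE n B' t0) l j)))) = C0).
    { rewrite Csum_add.
      transitivity (Cadd (Copp (Mmul n (Mmul n B (EE n B t0)) (EE n B' t0) i j))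
                         (Mmul n (Mmul n (EE n B t0) B) (EE n B' t0) i j)).
      - f_equal.
        + rewrite (Mmul_entry n (Mmul n B (EE n B t0)) (EE n B' t0)). rewrite <- Csum_opp. apply Csum_ext; intros; ring.
        + rewrite Mmul_assoc. rewrite (Mmul_entry n (EE n B t0)). apply Csum_ext; intros l Hl. unfold B'.
          rewrite Mmul_scal_l. unfold Mscal. ring.
      - pose proof (EE_comm n B B t0 (MEQ_intro n _ _ (fun _ _ _ _ => eq_refl))) as Hc.
        rewrite (MEQ_elim n _ _ i j (Mmul_proper n _ _ Hc _ _ (reflexivity (EE n B' t0))) Hi Hj). ring. }
    rewrite <- Hval. apply HD; intros l Hl; apply EE_deriv; auto. }
  pose proof (Cderiv_zero_const G HG t). unfold G in H. rewrite H.
  rewrite (MEQ_elim n _ _ i j (Mmul_proper n _ _ (EE_0 n B) _ _ (EE_0 n B')) Hi Hj).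
  rewrite (MEQ_elim n _ _ i j (Mmul_id_l n Mid) Hi Hj). auto.
Qed.

Lemma EE_inv_r n B t : MEQ n (Mmul n (EE n (Mscal (Copp C1) B) t) (EE n B t)) Mid.
Proof.
  pose proof (EE_inv_l n (Mscal (Copp C1) B) t). rewrite Mscal_neg_neg in H. auto.
Qed.

Lemma EE_invertible n B t : Minvertible n (EE n B t) /\ MEQ n (Minv n (EE n B t)) (EE n (Mscal (Copp C1) B) t).
Proof.
  split. apply Minvertible'_iff. exists (EE n (Mscal (Copp C1) B) t). split. apply EE_inv_l. apply EE_inv_r.
  apply Minv_eq. apply EE_inv_l. apply EE_inv_r.
Qed.

Definition yterm n (Y : Mat) (k : nat) (tau : C) : nat -> Mat :=
  fun p => match p with
           | O => M0
           | S _ => Mscal (Cmul (Cpow (Copp tau) p) (RC (/ INR (fact p)))) (Mpow n Y (k * p - 1))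
           end.
Definition ycoef n (Y : Mat) (k i j : nat) (p : nat) : C :=
  match p with
  | O => C0
  | S _ => Cmul (Cpow (Copp C1) p) (Cmul (RC (/ INR (fact p))) (Mpow n Y (k * p - 1) i j))
  end.

Lemma yterm_entry n Y k tau p i j : yterm n Y k tau p i j = Cmul (ycoef n Y k i j p) (Cpow tau p).
Proof.
  destruct p; simpl. unfold M0; ring.
  unfold Mscal. replace (Copp tau) with (Cmul (Copp C1) tau) by ring. rewrite Cpow_mul. simpl. ring.
Qed.

Lemma ycoef_bound n Y k i j p : (i < n)%nat -> (j < n)%nat ->
  Cnorm (ycoef n Y k i j p) <= 1 * (((Nrm n Y + 1) ^ k) ^ p / INR (fact p)).
Proof.
  intros Hi Hj. pose proof (INR_fact_pos p). pose proof (Nrm_ge0 n Y).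
  assert (0 <= ((Nrm n Y + 1) ^ k) ^ p / INR (fact p)).
  { apply Rmult_le_pos. apply pow_le, pow_le; lra. left; apply Rinv_0_lt_compat; auto. }
  destruct p. { unfold ycoef. rewrite Cnorm_C0. lra. }
  change (ycoef n Y k i j (S p)) with (Cmul (Cpow (Copp C1) (S p)) (Cmul (RC (/ INR (fact (S p)))) (Mpow n Y (k * S p - 1) i j))).
  rewrite !Cnorm_mul, Cnorm_pow, Cnorm_opp, Cnorm_RC.
  change C1 with (RC 1). rewrite Cnorm_RC, Rabs_R1, pow1.
  rewrite Rabs_right by (left; apply Rinv_0_lt_compat; auto).
  pose proof (Mpow_bound n Y (k * S p - 1) i j Hi Hj).
  assert ((Nrm n Y + 1) ^ (k * S p - 1) <= ((Nrm n Y + 1) ^ k) ^ S p).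
  { rewrite <- pow_mult. apply Rle_pow. lra. lia. }
  replace (1 * (((Nrm n Y + 1) ^ k) ^ S p / INR (fact (S p)))) with (1 * (/ INR (fact (S p)) * ((Nrm n Y + 1) ^ k) ^ S p)) by (field; lra).
  apply Rmult_le_compat_l. lra. apply Rmult_le_compat_l. left; apply Rinv_0_lt_compat; auto. lra.
Qed.

Lemma Yinv_conv n Y k tau : mconv n (yterm n Y k tau) (Yinv_expm1 n Y k tau).
Proof.
  unfold Yinv_expm1. apply (mconv_exists n (yterm n Y k tau)).
  intros i j Hi Hj. pose proof (ycoef_bound n Y k i j).
  destruct (psum_conv (ycoef n Y k i j) 1 ((Nrm n Y + 1) ^ k) tau ltac:(lra)
              ltac:(apply pow_le; pose proof (Nrm_ge0 n Y); lra) ltac:(intro; auto)) as [l Hl].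
  exists l. apply (Ccv_ext (psum (ycoef n Y k i j) tau)); auto.
  intros m. unfold psum. apply Csum_ext; intros. rewrite yterm_entry; auto.
Qed.

Lemma Yinv_entry_cv n Y k tau i j : (i < n)%nat -> (j < n)%nat ->
  Ccv (psum (ycoef n Y k i j) tau) (Yinv_expm1 n Y k tau i j).
Proof.
  intros Hi Hj. apply (Ccv_ext (fun m => Csum m (fun p => yterm n Y k tau p i j))).
  intros m. unfold psum. apply Csum_ext; intros. rewrite yterm_entry; auto.
  apply Yinv_conv; auto.
Qed.

Lemma Yinv_0 n Y k : MEQ n (Yinv_expm1 n Y k C0) M0.
Proof.
  apply MEQ_intro; intros i j Hi Hj. pose proof (Yinv_entry_cv n Y k C0 i j Hi Hj).
  pose proof (psum_C0 (ycoef n Y k i j)). rewrite (Ccv_unique _ _ _ H H0). reflexivity.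
Qed.

Lemma Yinv_deriv n Y k i j tau : (1 <= k)%nat -> (i < n)%nat -> (j < n)%nat ->
  Cderiv (fun tau => Yinv_expm1 n Y k tau i j) tau
         (Copp (Mmul n (Mpow n Y (k - 1)) (EE n (Mpow n Y k) tau) i j)).
Proof.
  intros Hk Hi Hj.
  apply (psum_deriv (ycoef n Y k i j) 1 ((Nrm n Y + 1) ^ k) (fun tau => Yinv_expm1 n Y k tau i j)
           (fun tau => Copp (Mmul n (Mpow n Y (k - 1)) (EE n (Mpow n Y k) tau) i j))).
  lra. apply pow_le; pose proof (Nrm_ge0 n Y); lra. intro; apply ycoef_bound; auto.
  intro t0. apply Yinv_entry_cv; auto.
  intro t0. pose proof (mconv_mul_l n (Mpow n Y (k - 1)) _ _ (EE_conv n (Mpow n Y k) t0) i j Hi Hj) as Hc.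
  apply (Ccv_ext (fun m => Copp (Csum m (fun p => Mmul n (Mpow n Y (k - 1)) (ea n (Mpow n Y k) t0 p) i j)))).
  - intros m. unfold psum. rewrite <- Csum_opp. apply Csum_ext; intros p _.
    assert (MEQ n (Mmul n (Mpow n Y (k - 1)) (ea n (Mpow n Y k) t0 p))
                  (Mscal (Cmul (RC (/ INR (fact p))) (Cpow (Copp t0) p)) (Mpow n Y (k * S p - 1)))).
    { rewrite ea_MEQ, Mmul_scal_r. apply Mscal_proper. rewrite Mpow_mul, Mpow_add.
      replace (k - 1 + k * p)%nat with (k * S p - 1)%nat by lia. reflexivity. }
    rewrite (MEQ_elim n _ _ i j H Hi Hj). unfold Mscal, dcoef, ycoef.
    rewrite <- (fact_INC p). replace (Copp t0) with (Cmul (Copp C1) t0) by ring. rewrite Cpow_mul.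
    cbn [Cpow]. ring.
  - apply Ccv_opp. auto.
Qed.

Lemma Yinv_mul_r n Y k tau : (1 <= k)%nat ->
  MEQ n (Mmul n (Yinv_expm1 n Y k tau) Y) (Msub (EE n (Mpow n Y k) tau) Mid).
Proof.
  intros Hk. apply (mconv_unique n (fun p => Mmul n (yterm n Y k tau p) Y)).
  - apply mconv_mul_r. apply Yinv_conv.
  - assert (H0 : MEQ n (ea n (Mpow n Y k) tau O) Mid).
    { rewrite ea_MEQ. apply MEQ_intro; intros; unfold Mscal; simpl. rewrite Rinv_1. unfold Mid.
      destruct (Nat.eqb i j); apply C_ext; simpl; ring. }
    apply (mconv_MEQ n (fun p => Mmul n (yterm n Y k tau p) Y) _ (Msub (EE n (Mpow n Y k) tau) (ea n (Mpow n Y k) tau O))).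
    intros; reflexivity. rewrite H0; reflexivity.
    apply mconv_drop0. apply EE_conv.
    + simpl. apply MEQ_intro; intros; unfold Mmul, M0. apply Csum_zero; intros; ring.
    + intros p. unfold yterm. rewrite Mmul_scal_l, ea_MEQ. rewrite <- Mpow_S_r, Mpow_mul.
      replace (S (k * S p - 1)) with (k * S p)%nat by lia.
      apply MEQ_intro; intros; unfold Mscal; ring.
Qed.

Lemma Yinv_mul_l n Y k tau : (1 <= k)%nat ->
  MEQ n (Mmul n Y (Yinv_expm1 n Y k tau)) (Msub (EE n (Mpow n Y k) tau) Mid).
Proof.
  intros Hk. apply (mconv_unique n (fun p => Mmul n Y (yterm n Y k tau p))).
  - apply mconv_mul_l. apply Yinv_conv.
  - assert (H0 : MEQ n (ea n (Mpow n Y k) tau O) Mid).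
    { rewrite ea_MEQ. apply MEQ_intro; intros; unfold Mscal; simpl. rewrite Rinv_1. unfold Mid.
      destruct (Nat.eqb i j); apply C_ext; simpl; ring. }
    apply (mconv_MEQ n (fun p => Mmul n Y (yterm n Y k tau p)) _ (Msub (EE n (Mpow n Y k) tau) (ea n (Mpow n Y k) tau O))).
    intros; reflexivity. rewrite H0; reflexivity.
    apply mconv_drop0. apply EE_conv.
    + simpl. apply MEQ_intro; intros; unfold Mmul, M0. apply Csum_zero; intros; ring.
    + intros p. unfold yterm. rewrite Mmul_scal_r, ea_MEQ. rewrite Mpow_mul.
      change (Mmul n Y (Mpow n Y (k * S p - 1))) with (Mpow n Y (S (k * S p - 1))).
      replace (S (k * S p - 1)) with (k * S p)%nat by lia.
      apply MEQ_intro; intros; unfold Mscal; ring.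
Qed.

Lemma pd_eq H s c L : Cderiv (fun u => H (shift s c u)) C0 L -> pd H s c = L.
Proof.
  intros HL. unfold pd. apply (Cderiv_unique (fun u => H (shift s c u)) C0).
  apply (epsilon_spec (inhabits C0) (fun L => Cderiv (fun u => H (shift s c u)) C0 L)). exists L; auto. auto.
Qed.

Lemma pd_Htr_X n k s a b : pd (Htr n k) s (cX a b) = C0.
Proof. apply pd_eq. apply (Cderiv_ext (fun _ => Htr n k s)). intro; reflexivity. apply Cderiv_const. Qed.
Lemma pd_Htr_V n k s a b : pd (Htr n k) s (cV a b) = C0.
Proof. apply pd_eq. apply (Cderiv_ext (fun _ => Htr n k s)). intro; reflexivity. apply Cderiv_const. Qed.
Lemma pd_Htr_W n k s a b : pd (Htr n k) s (cW a b) = C0.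
Proof. apply pd_eq. apply (Cderiv_ext (fun _ => Htr n k s)). intro; reflexivity. apply Cderiv_const. Qed.

Definition Eunit (a b : nat) : Mat := fun i j => if andb (Nat.eqb i a) (Nat.eqb j b) then C1 else C0.

Lemma Cderiv_addvar c t : Cderiv (fun u => Cadd c u) t C1.
Proof.
  intros e He. exists 1. split; [lra|]. intros h Hh _.
  replace (Csub (Cdiv (Csub (Cadd c (Cadd t h)) (Cadd c t)) h) C1) with C0 by (field; auto).
  rewrite Cnorm_C0; lra.
Qed.

Lemma upd2_deriv U a b i j : Cderiv (fun u => upd2 U a b u i j) C0 (Eunit a b i j).
Proof.
  unfold upd2, Eunit. destruct (andb (Nat.eqb i a) (Nat.eqb j b)).
  apply Cderiv_addvar. apply Cderiv_const.
Qed.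

Lemma upd2_0 U a b : upd2 U a b C0 = U.
Proof.
  apply functional_extensionality; intro i; apply functional_extensionality; intro j.
  unfold upd2. destruct (andb _ _); auto. ring.
Qed.

Fixpoint Dm n (U : Mat) (a b : nat) (p : nat) : Mat :=
  match p with
  | O => M0
  | S p' => Madd (Mmul n (Eunit a b) (Mpow n U p')) (Mmul n U (Dm n U a b p'))
  end.

Lemma Mpow_upd2_deriv n U a b p i j : Cderiv (fun u => Mpow n (upd2 U a b u) p i j) C0 (Dm n U a b p i j).
Proof.
  revert i j. induction p; intros i j.
  - simpl. apply Cderiv_const.
  - simpl. eapply Cderiv_ext; [intro; reflexivity|].
    pose proof (Mmul_deriv n (fun u => upd2 U a b u) (fun u => Mpow n (upd2 U a b u) p)
                  (Eunit a b) (Dm n U a b p) i j C0) as HD.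
    rewrite !upd2_0 in HD. unfold Madd. rewrite !Mmul_entry, <- Csum_add.
    apply HD. intros; apply upd2_deriv. intros; apply IHp.
Qed.

Lemma Mtr_MEQ n A B : MEQ n A B -> Mtr n A = Mtr n B.
Proof. intros H. unfold Mtr. apply Csum_ext; intros. apply (MEQ_elim n); auto. Qed.

Lemma Mtr_add n A B : Mtr n (Madd A B) = Cadd (Mtr n A) (Mtr n B).
Proof. unfold Mtr, Madd. apply Csum_add. Qed.

Lemma tr_unit n M N a b : (a < n)%nat -> (b < n)%nat ->
  Mtr n (Mmul n M (Mmul n (Eunit a b) N)) = Mmul n N M b a.
Proof.
  intros Ha Hb. unfold Mtr. rewrite Mmul_entry.
  transitivity (Csum n (fun i => Cmul (N b i) (M i a))).
  - apply Csum_ext; intros i Hi. rewrite Mmul_entry.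
    transitivity (Csum n (fun l => Cmul (dlt l a) (Cmul (M i l) (N b i)))).
    + apply Csum_ext; intros l Hl. rewrite Mmul_entry.
      transitivity (Cmul (M i l) (Cmul (dlt l a) (Csum n (fun x => Cmul (dlt x b) (N x i))))).
      * f_equal. rewrite <- Csum_scal_l. apply Csum_ext; intros x Hx. unfold Eunit, dlt.
        destruct (Nat.eqb l a), (Nat.eqb x b); simpl; ring.
      * rewrite Csum_dlt_l by auto. ring.
    + rewrite Csum_dlt_l by auto. ring.
  - reflexivity.
Qed.

Lemma tr_Dm n U a b p m : (a < n)%nat -> (b < n)%nat ->
  Mtr n (Mmul n (Mpow n U m) (Dm n U a b p)) = Cmul (INC p) (Mpow n U (m + p - 1) b a).
Proof.
  intros Ha Hb. revert m. induction p; intros m.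
  - simpl. rewrite INC_0. unfold Mtr. rewrite Csum_zero. ring. intros. unfold Mmul, M0. rewrite Csum_zero. ring.
    intros; ring.
  - simpl Dm. rewrite Mmul_add_r, Mtr_add. rewrite tr_unit by auto.
    rewrite <- Mmul_assoc.
    rewrite (Mtr_MEQ n _ (Mmul n (Mpow n U (S m)) (Dm n U a b p))).
    2:{ apply Mmul_proper; [|reflexivity]. symmetry. apply Mpow_S_r. }
    rewrite IHp. rewrite (MEQ_elim n _ _ b a (Mpow_add n U p m) Hb Ha).
    rewrite INC_S. destruct p.
    + rewrite INC_0. replace (m + 1 - 1)%nat with (0 + m)%nat by lia. ring.
    + replace (S m + S p - 1)%nat with (S p + m)%nat by lia.
      replace (m + S (S p) - 1)%nat with (S p + m)%nat by lia. ring.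
Qed.

Lemma INC_neq0 k : (1 <= k)%nat -> INC k <> C0.
Proof.
  intros Hk E. assert (Re (INC k) = 0) by (rewrite E; reflexivity). unfold INC, RC in H; simpl in H.
  assert (0 < INR k) by (apply lt_0_INR; lia). lra.
Qed.

Lemma pd_Htr_U n k s a b : (1 <= k)%nat -> (a < n)%nat -> (b < n)%nat ->
  pd (Htr n k) s (cU a b) = Mpow n (sU s) (k - 1) b a.
Proof.
  intros Hk Ha Hb. apply pd_eq. unfold Htr. simpl.
  replace (Mpow n (sU s) (k - 1) b a) with (Cmul (Cinv (INC k)) (Mtr n (Dm n (sU s) a b k))).
  - apply Cderiv_scal. unfold Mtr. apply (Cderiv_Csum n (fun l u => Mpow n (upd2 (sU s) a b u) k l l)).
    intros; apply Mpow_upd2_deriv.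
  - rewrite (Mtr_MEQ n _ (Mmul n (Mpow n (sU s) 0) (Dm n (sU s) a b k))).
    2:{ simpl. symmetry. apply Mmul_id_l. }
    rewrite tr_Dm by auto. simpl (0 + k)%nat. field. apply INC_neq0; auto.
Qed.

Definition DS n (f : nat -> nat -> C) : C := Csum n (fun a => Csum n (fun b => f a b)).

Lemma DS_ext n f g : (forall a b, (a < n)%nat -> (b < n)%nat -> f a b = g a b) -> DS n f = DS n g.
Proof. intros H. unfold DS. apply Csum_ext; intros. apply Csum_ext; intros. auto. Qed.
Lemma DS_add n f g : DS n (fun a b => Cadd (f a b) (g a b)) = Cadd (DS n f) (DS n g).
Proof. unfold DS. rewrite <- Csum_add. apply Csum_ext; intros. apply Csum_add. Qed.
Lemma DS_opp n f : DS n (fun a b => Copp (f a b)) = Copp (DS n f).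
Proof. unfold DS. rewrite <- Csum_opp. apply Csum_ext; intros. apply Csum_opp. Qed.
Lemma DS_scal n c f : DS n (fun a b => Cmul c (f a b)) = Cmul c (DS n f).
Proof. unfold DS. rewrite <- Csum_scal_l. apply Csum_ext; intros. apply Csum_scal_l. Qed.
Lemma DS_sub n f g : DS n (fun a b => Csub (f a b) (g a b)) = Csub (DS n f) (DS n g).
Proof. unfold Csub. rewrite <- DS_opp, <- DS_add. reflexivity. Qed.

Lemma DS_L0 n A i j : (i < n)%nat -> (j < n)%nat -> DS n (fun a b => Cmul (A b a) (Cmul (dlt a j) (dlt i b))) = A i j.
Proof.
  intros Hi Hj. unfold DS. transitivity (Csum n (fun a => Cmul (A i a) (dlt a j))).
  - apply Csum_ext; intros a Ha. rewrite <- (Csum_dlt_l' n i (fun b => Cmul (A b a) (dlt a j))) by auto.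
    apply Csum_ext; intros; ring.
  - apply (Csum_dlt_r n j (fun a => A i a)); auto.
Qed.
Lemma DS_L1 n A P i j : (i < n)%nat -> DS n (fun a b => Cmul (A b a) (Cmul (P a j) (dlt i b))) = Mmul n A P i j.
Proof.
  intros Hi. unfold DS. rewrite Mmul_entry. apply Csum_ext; intros a Ha.
  rewrite <- (Csum_dlt_l' n i (fun b => Cmul (A b a) (P a j))) by auto.
  apply Csum_ext; intros; ring.
Qed.
Lemma DS_L2 n A Q i j : (j < n)%nat -> DS n (fun a b => Cmul (A b a) (Cmul (dlt a j) (Q i b))) = Mmul n Q A i j.
Proof.
  intros Hj. unfold DS. rewrite Csum_swap. rewrite Mmul_entry. apply Csum_ext; intros b Hb.
  rewrite <- (Csum_dlt_l n j (fun a => Cmul (Q i b) (A b a))) by auto.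
  apply Csum_ext; intros; ring.
Qed.
Lemma DS_L3 n A P Q i j : DS n (fun a b => Cmul (A b a) (Cmul (P a j) (Q i b))) = Mmul n Q (Mmul n A P) i j.
Proof.
  unfold DS. rewrite Csum_swap. rewrite Mmul_entry. apply Csum_ext; intros b Hb.
  rewrite Mmul_entry. rewrite <- Csum_scal_l. apply Csum_ext; intros; ring.
Qed.

Lemma HamVF_reduce isY n d k s c : (1 <= k)%nat ->
  HamVF isY n d (Htr n k) s c = DS n (fun a b => Cmul (Mpow n (sU s) (k - 1) b a) (pb isY n s (cU a b) c)).
Proof.
  intros Hk. unfold HamVF, sum_coords.
  rewrite (Csum_zero n (fun a => Csum n (fun b => Cmul (pd (Htr n k) s (cX a b)) (pb isY n s (cX a b) c)))).
  rewrite (Csum_zero d (fun a => Csum n (fun b => Cmul (pd (Htr n k) s (cV a b)) (pb isY n s (cV a b) c)))).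
  rewrite (Csum_zero d (fun a => Csum n (fun b => Cmul (pd (Htr n k) s (cW a b)) (pb isY n s (cW a b) c)))).
  - transitivity (DS n (fun a b => Cmul (pd (Htr n k) s (cU a b)) (pb isY n s (cU a b) c))).
    + unfold DS. ring.
    + apply DS_ext; intros. rewrite pd_Htr_U; auto.
  - intros; apply Csum_zero; intros; rewrite pd_Htr_W; ring.
  - intros; apply Csum_zero; intros; rewrite pd_Htr_V; ring.
  - intros; apply Csum_zero; intros; rewrite pd_Htr_X; ring.
Qed.

Definition Vm (v : nat -> C) : Mat := fun _ j => v j.
Definition Wm (w : nat -> C) : Mat := fun i _ => w i.

Lemma Chalf2 z : Cmul Chalf (Cadd z z) = z.
Proof. unfold Chalf. apply C_ext; destruct z; simpl; field. Qed.

Section HV.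
Variables (isY : bool) (n d k' : nat) (s : St).
Let U := sU s.
Let X := sX s.
Let A := Mpow n U k'.

Lemma AU_comm : MEQ n (Mmul n A U) (Mmul n U A).
Proof. unfold A. symmetry. apply Mpow_comm1. Qed.

Lemma HamVF_X i j : (i < n)%nat -> (j < n)%nat ->
  HamVF isY n d (Htr n (S k')) s (cX i j) =
  Copp (Cadd (if isY then A i j else C0) (Mmul n X (Mpow n U (S k')) i j)).
Proof.
  intros Hi Hj. rewrite HamVF_reduce by lia. replace (S k' - 1)%nat with k' by lia. fold U. fold A.
  transitivity (DS n (fun a b => Copp (Cadd (Cmul (if isY then C1 else C0) (Cmul (A b a) (Cmul (dlt a j) (dlt i b))))
      (Cmul Chalf (Cadd (Cadd (Cmul (A b a) (Cmul (Mmul n U X a j) (dlt i b)))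
                              (Cmul (A b a) (Cmul (dlt a j) (Mmul n X U i b))))
                        (Csub (Cmul (A b a) (Cmul (U a j) (X i b))) (Cmul (A b a) (Cmul (X a j) (U i b))))))))).
  { apply DS_ext; intros. simpl pb. unfold brXU. fold U X. destruct isY; ring. }
  rewrite DS_opp, DS_add, DS_scal, DS_scal, !DS_add, DS_sub.
  rewrite DS_L0, DS_L1, DS_L2, !DS_L3 by auto.
  f_equal. f_equal. destruct isY; ring.
  rewrite <- Mmul_assoc. rewrite (MEQ_elim n _ _ i j (Mmul_proper n _ _ AU_comm _ _ (reflexivity X)) Hi Hj).
  rewrite Mmul_assoc.
  rewrite (MEQ_elim n (Mmul n X (Mmul n A U)) (Mmul n X (Mmul n U A)) i j (Mmul_proper n _ _ (reflexivity X) _ _ AU_comm) Hi Hj).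
  rewrite (Mmul_assoc n X U A). simpl Mpow. fold U A.
  set (T := Mmul n X (Mmul n U A) i j).
  rewrite <- (Chalf2 T) at 3. f_equal. ring.
Qed.

Lemma HamVF_U i j : (i < n)%nat -> (j < n)%nat -> HamVF isY n d (Htr n (S k')) s (cU i j) = C0.
Proof.
  intros Hi Hj. rewrite HamVF_reduce by lia. replace (S k' - 1)%nat with k' by lia. fold U. fold A.
  transitivity (DS n (fun a b => Cmul Chalf (Csub (Cmul (A b a) (Cmul (Mmul n U U a j) (dlt i b)))
                                                  (Cmul (A b a) (Cmul (dlt a j) (Mmul n U U i b)))))).
  { apply DS_ext; intros. simpl pb. fold U. ring. }
  rewrite DS_scal, DS_sub, DS_L1, DS_L2 by auto.
  assert (MEQ n (Mmul n A (Mmul n U U)) (Mmul n (Mmul n U U) A)).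
  { rewrite <- Mmul_assoc, AU_comm, Mmul_assoc, AU_comm, Mmul_assoc. reflexivity. }
  rewrite (MEQ_elim n _ _ i j H Hi Hj). ring.
Qed.

Lemma HamVF_V a l : (0 < n)%nat -> (l < n)%nat -> HamVF isY n d (Htr n (S k')) s (cV a l) = C0.
Proof.
  intros Hn Hl. rewrite HamVF_reduce by lia. replace (S k' - 1)%nat with k' by lia. fold U. fold A.
  set (v := sV s a).
  transitivity (DS n (fun a' b => Cmul Chalf (Csub (Cmul (A b a') (Cmul (dlt a' l) (Mmul n (Vm v) U 0%nat b)))
                                                   (Cmul (A b a') (Cmul (U a' l) (Vm v 0%nat b)))))).
  { apply DS_ext; intros. simpl pb. unfold brMV, VMv. fold U v. unfold Vm. rewrite Mmul_entry. ring. }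
  rewrite DS_scal, DS_sub, DS_L2, DS_L3 by auto.
  rewrite Mmul_assoc. rewrite (MEQ_elim n _ _ 0%nat l (Mmul_proper n _ _ (reflexivity (Vm v)) _ _ AU_comm) Hn Hl). ring.
Qed.

Lemma HamVF_W a k : (0 < n)%nat -> (k < n)%nat -> HamVF isY n d (Htr n (S k')) s (cW a k) = C0.
Proof.
  intros Hn Hk. rewrite HamVF_reduce by lia. replace (S k' - 1)%nat with k' by lia. fold U. fold A.
  set (w := sW s a).
  transitivity (DS n (fun a' b => Cmul Chalf (Csub (Cmul (A b a') (Cmul (Mmul n U (Wm w) a' 0%nat) (dlt k b)))
                                                   (Cmul (A b a') (Cmul (Wm w a' 0%nat) (U k b)))))).
  { apply DS_ext; intros. simpl pb. unfold brMW, MWv. fold U w. unfold Wm. rewrite Mmul_entry. ring. }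
  rewrite DS_scal, DS_sub, DS_L1, DS_L3 by auto.
  rewrite <- Mmul_assoc. rewrite (MEQ_elim n _ _ k 0%nat (Mmul_proper n _ _ AU_comm _ _ (reflexivity (Wm w))) Hk Hn).
  rewrite Mmul_assoc. ring.
Qed.
End HV.

Lemma XE_deriv n X A i j t : (i < n)%nat -> (j < n)%nat ->
  Cderiv (fun t => Mmul n X (EE n A t) i j) t (Copp (Mmul n X (Mmul n A (EE n A t)) i j)).
Proof.
  intros Hi Hj.
  pose proof (Mmul_deriv n (fun _ => X) (EE n A) M0 (fun a b => Copp (Mmul n A (EE n A t) a b)) i j t) as HD.
  replace (Copp (Mmul n X (Mmul n A (EE n A t)) i j)) with
    (Csum n (fun l => Cadd (Cmul (M0 i l) (EE n A t l j)) (Cmul (X i l) (Copp (Mmul n A (EE n A t) l j))))).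
  apply HD. intros; apply Cderiv_const. intros; apply EE_deriv; auto.
  rewrite Mmul_entry, <- Csum_opp. apply Csum_ext; intros. unfold M0; ring.
Qed.

Lemma comm_A n U k' : MEQ n (Mmul n U (Mpow n U (S k'))) (Mmul n (Mpow n U (S k')) U).
Proof. apply Mpow_comm1. Qed.

Lemma prodInv_eq n s s' m : sV s = sV s' -> sW s = sW s' -> prodInv n s m = prodInv n s' m.
Proof. intros HV HW. induction m; simpl; auto. rewrite IHm. unfold IdWV. rewrite HV, HW. auto. Qed.

Theorem case1 n d k' q s : (1 <= n)%nat -> inMtimes n d q s ->
       stEq n d (flow1 n (S k') s C0) s /\
       (forall t, inMtimes n d q (flow1 n (S k') s t)) /\
       is_flow false n d (Htr n (S k')) (flow1 n (S k') s).
Proof.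
  intros Hn Hs. set (U := sU s). set (X := sX s). set (A := Mpow n U (S k')).
  assert (Hfl : forall t, flow1 n (S k') s t = mkSt (Mmul n X (EE n A t)) U (sV s) (sW s)) by reflexivity.
  split; [|split].
  - intros c Hc. rewrite Hfl. destruct c; simpl; auto. destruct Hc as [Hi Hj].
    rewrite (MEQ_elim n _ _ i j (Mmul_proper n _ _ (reflexivity X) _ _ (EE_0 n A)) Hi Hj).
    apply (MEQ_elim n _ _ i j (Mmul_id_r n X)); auto.
  - intros t. rewrite Hfl. destruct Hs as [HX [HU [HW HM]]].
    destruct (EE_invertible n A t) as [HE HEi].
    destruct (Minvertible_mul n X (EE n A t) HX HE) as [HXE HXEi].
    split; [auto|split; [auto|split; [exact HW|]]].
    simpl. apply (proj1 (MEQ_Meq _ _ _)). apply (proj2 (MEQ_Meq _ _ _)) in HM. rewrite <- HM. fold U X.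
    rewrite (prodInv_eq n (mkSt (Mmul n X (EE n A t)) U (sV s) (sW s)) s d); auto.
    apply Mmul_proper; [|reflexivity]. apply Mmul_proper; [|reflexivity].
    rewrite HXEi. rewrite <- !Mmul_assoc. apply Mmul_proper; [|reflexivity].
    rewrite (Mmul_assoc n X (EE n A t) U).
    rewrite <- (EE_comm n U A t (comm_A n U k')).
    rewrite <- (Mmul_assoc n X U). rewrite (Mmul_assoc n (Mmul n X U)).
    destruct (Minv_spec n _ HE) as [E1 _]. rewrite E1. apply Mmul_id_r.
  - intros t c Hc. destruct c; simpl get.
    + destruct Hc as [Hi Hj]. rewrite Hfl.
      rewrite (HamVF_X false n d k' _ i j Hi Hj). simpl sX. simpl sU. fold A.
      eapply Cderiv_ext; [intro; reflexivity|].
      replace (Copp (Cadd C0 (Mmul n (Mmul n X (EE n A t)) A i j))) with (Copp (Mmul n X (Mmul n A (EE n A t)) i j)).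
      apply XE_deriv; auto.
      rewrite Mmul_assoc. rewrite (MEQ_elim n _ _ i j (Mmul_proper n _ _ (reflexivity X) _ _ (EE_comm n A A t (reflexivity _))) Hi Hj).
      ring.
    + destruct Hc as [Hi Hj]. rewrite (HamVF_U false n d k' _ i j Hi Hj). apply Cderiv_const.
    + destruct Hc as [Ha Hj]. rewrite (HamVF_V false n d k' _ a j ltac:(lia) Hj). apply Cderiv_const.
    + destruct Hc as [Ha Hj]. rewrite (HamVF_W false n d k' _ a i ltac:(lia) Hj). apply Cderiv_const.
Qed.

Theorem case2 n d k' q s : (1 <= n)%nat -> inM n d q s ->
       stEq n d (flow2 n (S k') s C0) s /\
       (forall tau, inM n d q (flow2 n (S k') s tau)) /\
       is_flow true n d (Htr n (S k')) (flow2 n (S k') s).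
Proof.
  intros Hn Hs. set (U := sU s). set (X := sX s). set (A := Mpow n U (S k')).
  set (Yi := fun tau => Yinv_expm1 n U (S k') tau).
  assert (Hfl : forall t, flow2 n (S k') s t = mkSt (Madd (Mmul n X (EE n A t)) (Yi t)) U (sV s) (sW s)) by reflexivity.
  assert (HEU : forall t, MEQ n (Mmul n (EE n A t) U) (Mmul n U (EE n A t))).
  { intros t. symmetry. apply EE_comm. apply comm_A. }
  split; [|split].
  - intros c Hc. rewrite Hfl. destruct c; simpl; auto. destruct Hc as [Hi Hj].
    unfold Madd. rewrite (MEQ_elim n _ _ i j (Mmul_proper n _ _ (reflexivity X) _ _ (EE_0 n A)) Hi Hj).
    rewrite (MEQ_elim n _ _ i j (Mmul_id_r n X) Hi Hj).
    unfold Yi. rewrite (MEQ_elim n _ _ i j (Yinv_0 n U (S k')) Hi Hj). unfold M0. fold X. ring.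
  - intros t. rewrite Hfl. unfold inM in *. cbv zeta in *. simpl sX; simpl sU.
    destruct Hs as [HXY [HYX [HW HM]]].
    set (E := EE n A t) in *.
    destruct (EE_invertible n A t) as [HE _]. fold E in HE.
    assert (H1 : MEQ n (Madd Mid (Mmul n (Madd (Mmul n X E) (Yi t)) U)) (Mmul n (Madd Mid (Mmul n X U)) E)).
    { rewrite Mmul_add_l. unfold Yi. rewrite (Yinv_mul_r n U (S k') t) by lia. fold A E.
      pose proof (HEU t) as HEU'. fold E in HEU'. rewrite Mmul_assoc, HEU'. rewrite Mmul_add_l.
      rewrite (Mmul_id_l n E). rewrite (Mmul_assoc n X U E).
      apply MEQ_intro; intros; unfold Madd, Msub; ring. }
    assert (H2 : MEQ n (Madd Mid (Mmul n U (Madd (Mmul n X E) (Yi t)))) (Mmul n (Madd Mid (Mmul n U X)) E)).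
    { rewrite Mmul_add_r. unfold Yi. rewrite (Yinv_mul_l n U (S k') t) by lia. fold A E.
      rewrite <- Mmul_assoc. rewrite Mmul_add_l.
      rewrite (Mmul_id_l n E).
      apply MEQ_intro; intros; unfold Madd, Msub; ring. }
    fold U X in HXY, HYX, HM.
    destruct (Minvertible_mul n _ _ HXY HE) as [I1 _].
    destruct (Minvertible_mul n _ _ HYX HE) as [I2 I2i].
    split; [apply (Minvertible_MEQ n _ _ (symmetry H1)); auto|].
    split; [apply (Minvertible_MEQ n _ _ (symmetry H2)); auto|].
    split; [exact HW|].
    apply (proj1 (MEQ_Meq _ _ _)). apply (proj2 (MEQ_Meq _ _ _)) in HM. rewrite <- HM.
    rewrite (prodInv_eq n (mkSt (Madd (Mmul n X E) (Yi t)) U (sV s) (sW s)) s d); auto.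
    apply Mmul_proper; [|reflexivity].
    rewrite H1. rewrite (Minv_MEQ n _ _ H2) by (apply (Minvertible_MEQ n _ _ (symmetry H2)); auto).
    rewrite I2i. rewrite Mmul_assoc, <- (Mmul_assoc n E).
    destruct (Minv_spec n _ HE) as [E1 _]. rewrite E1, Mmul_id_l. reflexivity.
  - intros t c Hc. destruct c; simpl get.
    + destruct Hc as [Hi Hj]. rewrite Hfl.
      rewrite (HamVF_X true n d k' _ i j Hi Hj). simpl sX. simpl sU. fold A.
      eapply Cderiv_ext; [intro; reflexivity|].
      replace (Copp (Cadd (Mpow n U k' i j) (Mmul n (Madd (Mmul n X (EE n A t)) (Yi t)) A i j)))
        with (Cadd (Copp (Mmul n X (Mmul n A (EE n A t)) i j)) (Copp (Mmul n (Mpow n U (S k' - 1)) (EE n (Mpow n U (S k')) t) i j))).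
      * unfold Madd. apply (Cderiv_add (fun t => Mmul n X (EE n A t) i j) (fun t => Yi t i j)).
        apply XE_deriv; auto. unfold Yi. apply Yinv_deriv; auto. lia.
      * replace (S k' - 1)%nat with k' by lia. fold A. rewrite Mmul_add_l. unfold Madd.
        rewrite (Mmul_assoc n X (EE n A t) A).
        rewrite (MEQ_elim n _ _ i j (Mmul_proper n _ _ (reflexivity X) _ _ (EE_comm n A A t (reflexivity _))) Hi Hj).
        assert (HY : MEQ n (Mmul n (Yi t) A) (Msub (Mmul n (EE n A t) (Mpow n U k')) (Mpow n U k'))).
        { unfold A at 1. simpl Mpow. rewrite <- Mmul_assoc. unfold Yi. rewrite (Yinv_mul_r n U (S k') t) by lia.
          fold A. rewrite Mmul_sub_l. rewrite (Mmul_id_l n (Mpow n U k')). reflexivity. }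
        rewrite (MEQ_elim n _ _ i j HY Hi Hj).
        assert (HC : MEQ n (Mmul n (Mpow n U k') A) (Mmul n A (Mpow n U k'))) by (unfold A; apply Mpow_comm).
        rewrite (MEQ_elim n _ _ i j (EE_comm n (Mpow n U k') A t HC) Hi Hj). unfold Msub. ring.
    + destruct Hc as [Hi Hj]. rewrite (HamVF_U true n d k' _ i j Hi Hj). apply Cderiv_const.
    + destruct Hc as [Ha Hj]. rewrite (HamVF_V true n d k' _ a j ltac:(lia) Hj). apply Cderiv_const.
    + destruct Hc as [Ha Hj]. rewrite (HamVF_W true n d k' _ a i ltac:(lia) Hj). apply Cderiv_const.
Qed.


Theorem mainTheorem14 :
  forall (n d k : nat) (q : C),
    (1 <= n)%nat -> (1 <= d)%nat -> (1 <= k)%nat ->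
    q <> C0 -> not_root_of_unity q ->
    (forall s : St, inMtimes n d q s ->
       stEq n d (flow1 n k s C0) s /\
       (forall t, inMtimes n d q (flow1 n k s t)) /\
       is_flow false n d (Htr n k) (flow1 n k s)) /\
    (forall s : St, inM n d q s ->
       stEq n d (flow2 n k s C0) s /\
       (forall tau, inM n d q (flow2 n k s tau)) /\
       is_flow true n d (Htr n k) (flow2 n k s)).
Proof.
  intros n d k q Hn Hd Hk Hq Hr. destruct k as [|k']; [lia|].
  split; intros s Hs; [apply case1|apply case2]; auto.
Qed.
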